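(* Let $0<a<b<1$ with $a+b=1$, let $m\in C^1([0,1])$ be non-constant and $c\in C([0,1])$, and assume (H1), (H2) and $m\in S_{\mathcal{D}}$. Then $\lim_{s\to+\infty}\lambda(s)=\lambda^{\mathcal{D}}$.
   Context: Fix an integer $d\ge1$. $\lambda(s)$ denotes the principal eigenvalue of $-\varphi''-\frac{d-1}{r}\varphi'-2s\,m'(r)\varphi'+c(r)\varphi=\lambda\varphi$ on $(0,1)$, $\varphi'(0)=\varphi'(1)=0$; equivalently $\lambda(s)=\min\{\int_0^1 r^{d-1}e^{2sm}(|\varphi'|^2+c\varphi^2)dr:\ \varphi\in H^1((0,1)),\ \int_0^1 r^{d-1}e^{2sm}\varphi^2dr=1\}$. $\lambda^{\mathcal{D}}$ (resp. $\lambda^{\mathcal{N}}$) is the principal eigenvalue of $-\varphi''-\frac{d-1}{r}\varphi'+c\varphi=\lambda\varphi$ on $(a,b)$ with Dirichlet (resp. Neumann) boundary conditions, i.e. the minimum of $\int_a^b r^{d-1}(|\varphi'|^2+c\varphi^2)dr$ over $\varphi\in H^1_0((a,b))$ (resp. $H^1((a,b))$) with $\int_a^b r^{d-1}\varphi^2dr=1$. (H1): $m(r)=m(1-r)$ on $[0,1]$ and $m\equiv0$ on $[a,b]$, where $a+b=1$. (H2): $c>0$ on $[0,1]$ and $c(r)>\lambda^{\mathcal{D}}$ for $r\in[0,a]\cup[b,1]$. Step function $\tilde m$: given $\delta\in(0,a)$, constants $0<h<\alpha<\beta<1<\nu$ and $l\in\mathbb{N}$ with $\sum_{i\ge1}(\alpha^{i+l}+\beta^{i+l})=a-\delta$,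 put $x_0=\delta$, $x_n=\delta+\sum_{i=1}^n(\alpha^{i+l}+\beta^{i+l})$ ($n\ge1$), $y_n=x_n+\alpha^{n+l+1}$ ($n\ge0$); define $\tilde m(r)=-h^n$ on $[x_n,y_n)$ and $\tilde m(r)=\nu h^n$ on $[y_n,x_{n+1})$ for $n\ge0$ (so on $[\delta,a)$), and $\tilde m(r)=\tilde m(1-r)$ for $r\in[b,1-\delta]$. $S_{\mathcal{D}}$: the set of $m\in C^1([0,1])$ such that, for some such $\delta,h,\alpha,\beta,\nu,l$, $m'$ changes sign only finitely many times in $[0,\delta)\cup(1-\delta,1]$ and $m(r)\ge\tilde m(r)$ for all $r\in[\delta,a]\cup[b,1-\delta]$. *)

(* Defs.v *)
From Stdlib Require Import Reals Lra.
From Coquelicot Require Import Coquelicot.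
Open Scope R_scope.

(* f is C^1 : differentiable everywhere with continuous derivative.
   (Restrictions to [0,1] of such functions are exactly C^1([0,1]).) *)
Definition C1fun (f : R -> R) : Prop :=
  (forall x, ex_derive f x) /\ (forall x, continuous (Derive f) x).

(* lambda(s): inf of the weighted Rayleigh quotient over C^1 test functions
   (dense in H^1((0,1)), so the inf equals the min over H^1). *)
Definition lambda_s (d : nat) (m c : R -> R) (s : R) : R :=
  real (Glb_Rbar (fun q : R => exists phi : R -> R,
    C1fun phi /\
    RInt (fun r => r ^ (d - 1) * exp (2 * s * m r) * (phi r) ^ 2) 0 1 = 1 /\
    q = RInt (fun r => r ^ (d - 1) * exp (2 * s * m r) *
                       ((Derive phi r) ^ 2 + c r * (phi r) ^ 2)) 0 1)).

(* lambda^D on (a,b): inf over C^1 test functions vanishing at a and b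
   (dense in H^1_0((a,b))). *)
Definition lambda_D (d : nat) (c : R -> R) (a b : R) : R :=
  real (Glb_Rbar (fun q : R => exists phi : R -> R,
    C1fun phi /\ phi a = 0 /\ phi b = 0 /\
    RInt (fun r => r ^ (d - 1) * (phi r) ^ 2) a b = 1 /\
    q = RInt (fun r => r ^ (d - 1) * ((Derive phi r) ^ 2 + c r * (phi r) ^ 2)) a b)).

Definition lambda_N (d : nat) (c : R -> R) (a b : R) : R :=
  real (Glb_Rbar (fun q : R => exists phi : R -> R,
    C1fun phi /\
    RInt (fun r => r ^ (d - 1) * (phi r) ^ 2) a b = 1 /\
    q = RInt (fun r => r ^ (d - 1) * ((Derive phi r) ^ 2 + c r * (phi r) ^ 2)) a b)).

Definition H1 (m : R -> R) (a b : R) : Prop :=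
  (forall r, 0 <= r <= 1 -> m r = m (1 - r)) /\
  (forall r, a <= r <= b -> m r = 0).

Definition H2 (d : nat) (c : R -> R) (a b : R) : Prop :=
  (forall r, 0 <= r <= 1 -> 0 < c r) /\
  (forall r, (0 <= r <= a \/ b <= r <= 1) -> lambda_D d c a b < c r).

Definition finitely_many_sign_changes (f : R -> R) (u v : R) : Prop :=
  exists (n : nat) (p : nat -> R),
    p 0%nat = u /\ p n = v /\
    (forall i, (i < n)%nat -> p i < p (S i)) /\
    (forall i, (i < n)%nat ->
       (forall x, p i <= x <= p (S i) -> 0 <= f x) \/
       (forall x, p i <= x <= p (S i) -> f x <= 0)).

Fixpoint xs (delta alpha beta : R) (l n : nat) : R :=
  match n with
  | O => delta
  | S k => xs delta alpha beta l k + alpha ^ (S k + l) + beta ^ (S k + l)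
  end.

Definition ys (delta alpha beta : R) (l n : nat) : R :=
  xs delta alpha beta l n + alpha ^ (n + l + 1).

(* m >= m~ on [delta,a) and on (b,1-delta] (via m~(r) = m~(1-r)).
   m~ is -h^n on [x_n,y_n) and nu h^n on [y_n,x_{n+1}). *)
Definition above_mtilde (m : R -> R) (delta h alpha beta nu : R) (l : nat) : Prop :=
  forall (n : nat) (r : R),
    (xs delta alpha beta l n <= r < ys delta alpha beta l n ->
       - h ^ n <= m r /\ - h ^ n <= m (1 - r)) /\
    (ys delta alpha beta l n <= r < xs delta alpha beta l (S n) ->
       nu * h ^ n <= m r /\ nu * h ^ n <= m (1 - r)).

Definition in_SD (m : R -> R) (a b : R) : Prop :=
  exists (delta h alpha beta nu : R) (l : nat),
    0 < delta < a /\
    0 < h /\ h < alpha /\ alpha < beta /\ beta < 1 /\ 1 < nu /\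
    is_series (fun i : nat => alpha ^ (S i + l) + beta ^ (S i + l)) (a - delta) /\
    finitely_many_sign_changes (Derive m) 0 delta /\
    finitely_many_sign_changes (Derive m) (1 - delta) 1 /\
    above_mtilde m delta h alpha beta nu l.

(* Main.v *)
Require Import Defs.
From Stdlib Require Import Reals Lra Psatz Classical ZArith.
From Coquelicot Require Import Coquelicot.
Open Scope R_scope.


Lemma cmul (f g : R -> R) x : continuous f x -> continuous g x -> continuous (fun y => f y * g y) x.
Proof. intros; apply (continuous_mult f g); auto. Qed.
Lemma cplus (f g : R -> R) x : continuous f x -> continuous g x -> continuous (fun y => f y + g y) x.
Proof. intros; apply (continuous_plus f g); auto. Qed.
Lemma copp (f : R -> R) x : continuous f x -> continuous (fun y => - f y) x.
Proof. intros; apply (continuous_opp f); auto. Qed.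
Lemma cminus (f g : R -> R) x : continuous f x -> continuous g x -> continuous (fun y => f y - g y) x.
Proof. intros; apply cplus; auto; apply copp; auto. Qed.
Lemma cpow (f : R -> R) n x : continuous f x -> continuous (fun y => f y ^ n) x.
Proof. intros H; induction n; simpl. apply continuous_const. apply cmul; auto. Qed.
Lemma cexp (f : R -> R) x : continuous f x -> continuous (fun y => exp (f y)) x.
Proof. intros; apply continuous_exp_comp; auto. Qed.
Lemma cabs (f : R -> R) x : continuous f x -> continuous (fun y => Rabs (f y)) x.
Proof. intros; apply continuous_Rabs_comp; auto. Qed.
Lemma cdiv (f : R -> R) k x : continuous f x -> continuous (fun y => f y / k) x.
Proof. intros; unfold Rdiv; apply cmul; auto; apply continuous_const. Qed.

Ltac cont := repeat match goal with
 | |- continuous (fun _ => ?c) _ => apply continuous_const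
 | |- continuous (fun y => y) _ => apply continuous_id
 | |- continuous (fun y => @?f y * @?g y) _ => apply (cmul f g)
 | |- continuous (fun y => @?f y + @?g y) _ => apply (cplus f g)
 | |- continuous (fun y => @?f y - @?g y) _ => apply (cminus f g)
 | |- continuous (fun y => - @?f y) _ => apply (copp f)
 | |- continuous (fun y => @?f y / ?k) _ => apply (cdiv f k)
 | |- continuous (fun y => @?f y ^ ?n) _ => apply (cpow f n)
 | |- continuous (fun y => exp (@?f y)) _ => apply (cexp f)
 | |- continuous (fun y => Rabs (@?f y)) _ => apply (cabs f)
 | H : forall x, continuous ?f x |- continuous ?f _ => apply H
 | H : forall x, continuous ?f x |- continuous (fun y => ?f y) _ => apply H
 | H : forall x, continuous ?f x |- continuous (fun y => ?f (@?g y)) _ =>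
     apply (continuous_comp g f); [| apply H]
 end.

Lemma exRI (f : R -> R) a b : (forall x, continuous f x) -> ex_RInt f a b.
Proof. intros H; apply (@ex_RInt_continuous R_CompleteNormedModule); intros; apply H. Qed.

Lemma RInt_plusR (f g : R -> R) a b : ex_RInt f a b -> ex_RInt g a b ->
  RInt (fun x => f x + g x) a b = RInt f a b + RInt g a b.
Proof. intros; apply (RInt_plus f g); auto. Qed.
Lemma RInt_scalR (f : R -> R) a b l : ex_RInt f a b ->
  RInt (fun x => l * f x) a b = l * RInt f a b.
Proof. intros; apply (RInt_scal f a b l); auto. Qed.
Lemma RInt_lin (f g : R -> R) a b k l : ex_RInt f a b -> ex_RInt g a b ->
  RInt (fun x => k * f x + l * g x) a b = k * RInt f a b + l * RInt g a b.
Proof.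
  intros; rewrite RInt_plusR. rewrite !RInt_scalR; auto.
  apply (ex_RInt_scal f a b k); auto. apply (ex_RInt_scal g a b l); auto.
Qed.
Lemma ChaslesR (f : R -> R) a b c : ex_RInt f a b -> ex_RInt f b c ->
  RInt f a b + RInt f b c = RInt f a c.
Proof. intros; apply (RInt_Chasles f); auto. Qed.

Lemma RInt_sub (f : R -> R) u p q v : (forall x, continuous f x) ->
  u <= p -> p <= q -> q <= v -> (forall x, u < x < v -> 0 <= f x) ->
  RInt f p q <= RInt f u v.
Proof.
  intros Hc H1 H2 H3 Hp.
  rewrite <- (ChaslesR f u p v), <- (ChaslesR f p q v); try apply exRI; auto.
  assert (0 <= RInt f u p). apply RInt_ge_0; auto. apply exRI; auto. intros; apply Hp; lra.
  assert (0 <= RInt f q v). apply RInt_ge_0; auto. apply exRI; auto. intros; apply Hp; lra.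
  lra.
Qed.

Lemma RInt_leR (f g : R -> R) a b : a <= b -> (forall x, continuous f x) -> (forall x, continuous g x) ->
  (forall x, a < x < b -> f x <= g x) -> RInt f a b <= RInt g a b.
Proof. intros; apply RInt_le; auto; apply exRI; auto. Qed.

Lemma glb_props (E : R -> Prop) : (exists x, E x) -> (forall x, E x -> 0 <= x) ->
  (forall x, E x -> real (Glb_Rbar E) <= x) /\
  (forall L, (forall x, E x -> L <= x) -> L <= real (Glb_Rbar E)).
Proof.
  intros [x0 Hx0] Hlb. destruct (Glb_Rbar_correct E) as [H1 H2].
  destruct (Glb_Rbar E) as [g| |] eqn:Heq.
  - simpl. split. intros x Hx; apply (H1 x Hx).
    intros L HL. apply (H2 (Finite L)). intros y Hy; simpl; apply HL; auto.
  - exfalso. specialize (H1 x0 Hx0). simpl in H1. exact H1.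
  - exfalso. assert (Hl : is_lb_Rbar E (Finite 0)). intros y Hy; simpl; apply Hlb; auto.
    specialize (H2 _ Hl). simpl in H2. exact H2.
Qed.

Lemma C1_intro (f g : R -> R) : (forall x, is_derive f x (g x)) -> (forall x, continuous g x) ->
  C1fun f /\ (forall x, Derive f x = g x).
Proof.
  intros Hd Hc. assert (HD : forall x, Derive f x = g x) by (intros; apply is_derive_unique; auto).
  split; auto. split. intros x; eexists; eauto.
  intros x. eapply continuous_ext; [|apply (Hc x)]. intros; rewrite HD; auto.
Qed.

Lemma C1_cont f : C1fun f -> forall x, continuous f x.
Proof. intros [H _] x; apply (@ex_derive_continuous R_AbsRing R_NormedModule); auto. Qed.
Lemma C1_dcont f : C1fun f -> forall x, continuous (Derive f) x.
Proof. intros [_ H] x; auto. Qed.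
Lemma C1_der f : C1fun f -> forall x, is_derive f x (Derive f x).
Proof. intros [H _] x; apply Derive_correct; auto. Qed.


Definition pp (x : R) := (x + Rabs x) / 2.
Definition G (x : R) := pp x ^ 2.

Lemma pp_cont x : continuous pp x.
Proof. unfold pp. cont. Qed.

Lemma G_key x h : Rabs (G (x + h) - G x - 2 * pp x * h) <= h ^ 2.
Proof.
  unfold G, pp. apply Rabs_le.
  unfold Rabs; destruct (Rcase_abs x), (Rcase_abs (x + h)); split; nra.
Qed.

Lemma G_deriv x : is_derive G x (2 * pp x).
Proof.
  apply is_derive_Reals. intros eps Heps. exists (mkposreal eps Heps).
  intros h Hh0 Hh. simpl in Hh.
  replace ((G (x + h) - G x) / h - 2 * pp x) with ((G (x + h) - G x - 2 * pp x * h) / h)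
    by (field; auto).
  rewrite Rabs_div; auto. apply Rle_lt_trans with (Rabs h); auto.
  assert (0 < Rabs h) by (apply Rabs_pos_lt; auto).
  apply Rmult_le_reg_r with (Rabs h); auto. unfold Rdiv; rewrite Rmult_assoc, Rinv_l; try lra.
  rewrite Rmult_1_r. replace (Rabs h * Rabs h) with (h ^ 2). apply G_key.
  rewrite <- Rabs_mult. simpl. rewrite Rmult_1_r. symmetry; apply Rabs_pos_eq. nra.
Qed.



Lemma is_derive_eq (f : R -> R) x l l' : is_derive f x l -> l = l' -> is_derive f x l'.
Proof. intros H ->; auto. Qed.

Lemma lin_deriv u v t : is_derive (fun t => u * t + v) t u.
Proof. auto_derive; auto; ring. Qed.
Lemma Glin_deriv u v t : is_derive (fun t => G (u * t + v)) t (u * (2 * pp (u * t + v))).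
Proof.
  eapply is_derive_eq. apply (is_derive_comp G (fun t => u * t + v)).
  apply G_deriv. apply lin_deriv. reflexivity.
Qed.
Lemma scal_deriv (f : R -> R) k t l : is_derive f t l -> is_derive (fun t => k * f t) t (k * l).
Proof. intros H. apply (is_derive_scal f t k l H). Qed.
Lemma plus_deriv (f g : R -> R) t l1 l2 : is_derive f t l1 -> is_derive g t l2 -> is_derive (fun t => f t + g t) t (l1 + l2).
Proof. intros H1 H2. apply (is_derive_plus f g t l1 l2 H1 H2). Qed.
Definition F (e t : R) := (G (t - e) - G (t - 2 * e) - G (- t - e) + G (- t - 2 * e)) / (2 * e).
Definition F' (e t : R) := (pp (t - e) - pp (t - 2 * e)) / e + (pp (- t - e) - pp (- t - 2 * e)) / e.
Lemma F_deriv e (t : R) : 0 < e -> is_derive (F e) t (F' e t).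
Proof.
  intros He.
  assert (HE : forall x : R, / (2 * e) * ((G (1 * x + - e) + (-1) * G (1 * x + - (2 * e))) + ((-1) * G (-1 * x + - e) + G (-1 * x + - (2 * e)))) = F e x).
  { intros x; unfold F. replace (1 * x + - e) with (x - e) by ring. replace (1 * x + - (2*e)) with (x - 2*e) by ring.
    replace (-1 * x + - e) with (- x - e) by ring. replace (-1 * x + - (2*e)) with (- x - 2*e) by ring. field. lra. }
  apply (is_derive_ext _ _ t _ HE).
  eapply is_derive_eq.
  apply scal_deriv. apply plus_deriv; [apply plus_deriv; [apply Glin_deriv | apply scal_deriv; apply Glin_deriv] | apply plus_deriv; [apply scal_deriv; apply Glin_deriv | apply Glin_deriv]].
  unfold F'. match goal with |- ?A = ?B => change (@eq R A B) end. replace (1 * t + - e) with (t - e) by ring. replace (1 * t + - (2*e)) with (t - 2*e) by ring.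
    replace (-1 * t + - e) with (- t - e) by ring. replace (-1 * t + - (2*e)) with (- t - 2*e) by ring. field. lra.
Qed.
Lemma F'_cont e t : continuous (F' e) t.
Proof. unfold F'. pose proof pp_cont as Hpp. cont. Qed.
Lemma pp_neg x : x <= 0 -> pp x = 0.
Proof. intros; unfold pp; rewrite Rabs_left1; auto; lra. Qed.
Lemma pp_pos x : 0 <= x -> pp x = x.
Proof. intros; unfold pp; rewrite Rabs_pos_eq; auto; lra. Qed.
Lemma G_neg x : x <= 0 -> G x = 0.
Proof. intros; unfold G; rewrite pp_neg; auto; ring. Qed.
Lemma G_pos x : 0 <= x -> G x = x ^ 2.
Proof. intros; unfold G; rewrite pp_pos; auto. Qed.

Lemma F_cases e t : 0 < e -> 0 <= t ->
  (t <= e /\ F e t = 0 /\ F' e t = 0) \/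
  (e <= t <= 2 * e /\ F e t = (t - e) ^ 2 / (2 * e) /\ F' e t = (t - e) / e) \/
  (2 * e <= t /\ F e t = t - 3 * e / 2 /\ F' e t = 1).
Proof.
  intros He Ht. unfold F, F'.
  rewrite (G_neg (- t - e)), (G_neg (- t - 2 * e)), (pp_neg (- t - e)), (pp_neg (- t - 2 * e)) by lra.
  destruct (Rle_dec t e).
  - left. rewrite (G_neg (t - e)), (G_neg (t - 2 * e)), (pp_neg (t - e)), (pp_neg (t - 2 * e)) by lra.
    split; auto. split; field; lra.
  - destruct (Rle_dec t (2 * e)).
    + right; left. rewrite (G_pos (t - e)), (G_neg (t - 2 * e)), (pp_pos (t - e)), (pp_neg (t - 2 * e)) by lra.
      split. lra. split; field; lra.
    + right; right. rewrite (G_pos (t - e)), (G_pos (t - 2 * e)), (pp_pos (t - e)), (pp_pos (t - 2 * e)) by lra.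
      split. lra. split; field; lra.
Qed.

Lemma F_odd e t : F e (- t) = - F e t.
Proof. unfold F. replace (- - t) with t by ring. unfold Rdiv; ring. Qed.
Lemma F'_even e t : F' e (- t) = F' e t.
Proof. unfold F'. replace (- - t) with t by ring. unfold Rdiv; ring. Qed.

Lemma F_pos_props e t : 0 < e -> 0 <= t ->
  0 <= F e t /\ t - 2 * e <= F e t /\ F e t <= t /\ 0 <= F' e t <= 1 /\ (t <= e -> F e t = 0).
Proof.
  intros He Ht. assert (Hi : 0 < / e) by (apply Rinv_0_lt_compat; auto).
  assert (Hi2 : / e * e = 1) by (field; lra).
  destruct (F_cases e t He Ht) as [[H1 [H2 H3]]|[[[H1 H1'] [H2 H3]]|[H1 [H2 H3]]]]; rewrite H2, H3.
  - repeat split; lra.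
  - replace ((t - e) ^ 2 / (2 * e)) with ((t - e) * ((t - e) * / e) / 2) by (field; lra).
    assert (A1 : 0 <= (t - e) * / e) by (apply Rmult_le_pos; lra).
    assert (A2 : (t - e) * / e <= 1).
    { apply Rmult_le_reg_r with e; auto. rewrite Rmult_assoc, Hi2. lra. }
    assert (A3 : 0 <= (t - e) * ((t - e) * / e)) by (apply Rmult_le_pos; lra).
    assert (A4 : (t - e) * ((t - e) * / e) <= t - e) by nra.
    split. lra. split. lra. split. lra. split. split; lra.
    intros. assert (t = e) by lra. subst t. rewrite Rminus_diag. unfold Rdiv. rewrite !Rmult_0_l. reflexivity.
  - split. lra. split. lra. split. lra. split. lra. intros; lra.
Qed.

Lemma F_props e t : 0 < e ->
  0 <= F' e t <= 1 /\ F e t ^ 2 <= t ^ 2 /\ (1 - 2 * e) * t ^ 2 - 2 * e <= F e t ^ 2 /\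
  (Rabs t <= e -> F e t = 0).
Proof.
  intros He.
  assert (K : forall t, 0 <= t -> 0 <= F' e t <= 1 /\ F e t ^ 2 <= t ^ 2 /\ (1 - 2 * e) * t ^ 2 - 2 * e <= F e t ^ 2 /\
  (Rabs t <= e -> F e t = 0)).
  { intros u Hu. destruct (F_pos_props e u He Hu) as [A [B [C [D E]]]].
    split; auto. split. nra. split. 
    assert (Q1 : 0 <= e * (u - 1) ^ 2) by (apply Rmult_le_pos; [lra | apply pow2_ge_0]).
    assert (Q2 : 0 <= F e u ^ 2) by apply pow2_ge_0.
    destruct (Rle_dec (2 * e) u).
    assert (Q3 : (u - 2 * e) ^ 2 <= F e u ^ 2) by (apply pow_incr; lra). nra.
    assert (Q3 : u * (u - 4 * e) <= 0) by (apply Rmult_le_0_l; lra). nra.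
    intros Hr; apply E. rewrite Rabs_pos_eq in Hr; auto. }
  destruct (Rle_dec 0 t). apply K; auto.
  destruct (K (- t)) as [A [B [C D]]]. lra.
  rewrite F_odd in *. rewrite F'_even in A. split; auto. split. nra. split. nra.
  intros Hr. rewrite <- Rabs_Ropp in Hr. specialize (D Hr). lra.
Qed.


Ltac fixR := repeat match goal with
  | x : AbsRing.sort _ |- _ => change R in x
  | x : UniformSpace.sort _ |- _ => change R in x
  | x : NormedModule.sort _ _ |- _ => change R in x
  end.
Ltac toR := fixR; match goal with |- ?A = ?B => change (@eq R A B) end.

Definition Qf (W c phi : R -> R) (u v : R) : R := RInt (fun r => W r * (Derive phi r ^ 2 + c r * phi r ^ 2)) u v.
Definition Nf (W phi : R -> R) (u v : R) : R := RInt (fun r => W r * phi r ^ 2) u v.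

Lemma C1_scal (phi : R -> R) k : C1fun phi -> C1fun (fun x => k * phi x) /\ (forall x, Derive (fun x => k * phi x) x = k * Derive phi x).
Proof.
  intros H. apply C1_intro.
  intros x. apply scal_deriv. apply C1_der; auto.
  intros x. pose proof (C1_dcont _ H) as H'. cont.
Qed.

Lemma Q_scal W c phi k u v : C1fun phi -> (forall x, continuous W x) -> (forall x, continuous c x) ->
  Qf W c (fun x => k * phi x) u v = k ^ 2 * Qf W c phi u v.
Proof.
  intros H HW Hc. destruct (C1_scal phi k H) as [_ HD]. unfold Qf.
  rewrite <- RInt_scalR. apply RInt_ext. intros x _. toR. rewrite HD. ring.
  apply exRI. intros x. pose proof (C1_dcont _ H) as H'. pose proof (C1_cont _ H) as H''. cont.
Qed.

Lemma N_scal W phi k u v : C1fun phi -> (forall x, continuous W x) ->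
  Nf W (fun x => k * phi x) u v = k ^ 2 * Nf W phi u v.
Proof.
  intros H HW. unfold Nf.
  rewrite <- RInt_scalR. apply RInt_ext. intros x _. toR. ring.
  apply exRI. intros x. pose proof (C1_cont _ H) as H''. cont.
Qed.

Lemma Q_nonneg W c phi u v : C1fun phi -> (forall x, continuous W x) -> (forall x, continuous c x) -> u <= v ->
  (forall x, u < x < v -> 0 <= W x /\ 0 <= c x) -> 0 <= Qf W c phi u v.
Proof.
  intros H HW Hc Huv Hp. unfold Qf. apply RInt_ge_0; auto.
  apply exRI. intros x. pose proof (C1_dcont _ H) as H'. pose proof (C1_cont _ H) as H''. cont.
  intros x Hx. destruct (Hp x Hx). apply Rmult_le_pos; auto.
  apply Rplus_le_le_0_compat. apply pow2_ge_0. apply Rmult_le_pos; auto. apply pow2_ge_0.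
Qed.

Lemma N_nonneg W phi u v : C1fun phi -> (forall x, continuous W x) -> u <= v ->
  (forall x, u < x < v -> 0 <= W x) -> 0 <= Nf W phi u v.
Proof.
  intros H HW Huv Hp. unfold Nf. apply RInt_ge_0; auto.
  apply exRI. intros x. pose proof (C1_cont _ H) as H''. cont.
  intros x Hx. apply Rmult_le_pos; auto. apply pow2_ge_0.
Qed.

Definition ED d c a b := fun q : R => exists phi : R -> R,
    C1fun phi /\ phi a = 0 /\ phi b = 0 /\
    RInt (fun r => r ^ (d - 1) * (phi r) ^ 2) a b = 1 /\
    q = RInt (fun r => r ^ (d - 1) * ((Derive phi r) ^ 2 + c r * (phi r) ^ 2)) a b.

Lemma pw_cont d x : continuous (fun r => r ^ d) x.
Proof. cont. Qed.

Lemma ED_nonempty (d : nat) (c : R -> R) (a b : R) : 0 < a -> a < b -> (forall x, continuous c x) -> exists q, ED d c a b q.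
Proof.
  intros Ha Hab Hc.
  set (p0 := fun r => (r - a) * (b - r)).
  assert (Hp0 : C1fun p0 /\ forall x, Derive p0 x = (b - x) - (x - a)).
  { apply C1_intro. intros x; unfold p0; auto_derive; auto. toR; ring. intros; cont. }
  destruct Hp0 as [Hp0 _].
  set (N0 := Nf (fun r => r ^ (d - 1)) p0 a b).
  assert (HN0 : 0 < N0).
  { unfold N0, Nf. apply Rle_lt_trans with (RInt (fun _ => 0) a b).
    rewrite RInt_const. unfold scal; simpl; unfold mult; simpl. lra.
    apply RInt_lt; auto. intros; cont. apply (C1_cont _ Hp0). intros; cont.
    intros x Hx. apply Rmult_lt_0_compat. apply pow_lt; lra. unfold p0.
    apply pow_lt. apply Rmult_lt_0_compat; lra. }
  destruct (C1_scal p0 (/ sqrt N0) Hp0) as [H1 H2].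
  exists (Qf (fun r => r ^ (d - 1)) c (fun x => / sqrt N0 * p0 x) a b).
  exists (fun x => / sqrt N0 * p0 x). split; auto. split. unfold p0; ring. split. unfold p0; ring.
  split; [|reflexivity].
  change (Nf (fun r => r ^ (d - 1)) (fun x => / sqrt N0 * p0 x) a b = 1).
  rewrite N_scal; auto. fold N0. rewrite <- Rinv_pow, pow2_sqrt; try lra.
  apply Rinv_l; lra. apply Rgt_not_eq, sqrt_lt_R0; auto. intros; apply pw_cont.
Qed.


Lemma lamD_props (d : nat) (c : R -> R) (a b : R) : 0 < a -> a < b -> (forall x, continuous c x) ->
  (forall r, a <= r <= b -> 0 < c r) ->
  (forall q, ED d c a b q -> lambda_D d c a b <= q) /\
  (forall L, (forall q, ED d c a b q -> L <= q) -> L <= lambda_D d c a b) /\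
  0 <= lambda_D d c a b.
Proof.
  intros Ha Hab Hc Hcp.
  change (lambda_D d c a b) with (real (Glb_Rbar (ED d c a b))).
  assert (Hnn : forall q, ED d c a b q -> 0 <= q).
  { intros q [phi [H1 [H2 [H3 [H4 H5]]]]]. rewrite H5.
    change (0 <= Qf (fun r => r ^ (d - 1)) c phi a b). apply Q_nonneg; auto.
    intros; apply pw_cont. lra. intros x Hx. split. apply pow_le; lra. apply Rlt_le, Hcp; lra. }
  destruct (glb_props (ED d c a b) (ED_nonempty d c a b Ha Hab Hc) Hnn) as [P1 P2].
  refine (conj P1 (conj P2 _)).
  destruct (ED_nonempty d c a b Ha Hab Hc) as [q0 Hq0].
  apply P2. auto.
Qed.

Lemma Dir_ineq (d : nat) (c : R -> R) (a b : R) (psi : R -> R) : 0 < a -> a < b -> (forall x, continuous c x) ->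
  (forall r, a <= r <= b -> 0 < c r) -> C1fun psi -> psi a = 0 -> psi b = 0 ->
  lambda_D d c a b * Nf (fun r => r ^ (d - 1)) psi a b <= Qf (fun r => r ^ (d - 1)) c psi a b.
Proof.
  intros Ha Hab Hc Hcp Hpsi Hpa Hpb.
  destruct (lamD_props d c a b Ha Hab Hc Hcp) as [P1 [P2 P3]].
  set (W := fun r : R => r ^ (d - 1)).
  assert (HW : forall x, continuous W x) by (intros; apply pw_cont).
  assert (HN : 0 <= Nf W psi a b). { apply N_nonneg; auto. lra. intros; apply pow_le; lra. }
  assert (HQ : 0 <= Qf W c psi a b). { apply Q_nonneg; auto. lra. intros x Hx; split. apply pow_le; lra. apply Rlt_le, Hcp; lra. }
  destruct (Req_dec (Nf W psi a b) 0) as [E|E].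
  { rewrite E. lra. }
  set (N := Nf W psi a b) in *.
  assert (HNp : 0 < N) by lra.
  destruct (C1_scal psi (/ sqrt N) Hpsi) as [H1 H2].
  assert (Hmem : ED d c a b (Qf W c (fun x => / sqrt N * psi x) a b)).
  { exists (fun x => / sqrt N * psi x). split; auto. split. rewrite Hpa; ring. split. rewrite Hpb; ring.
    split; [|reflexivity].
    change (Nf W (fun x => / sqrt N * psi x) a b = 1).
    rewrite N_scal; auto. fold N. rewrite <- Rinv_pow, pow2_sqrt; try lra.
    apply Rinv_l; lra. apply Rgt_not_eq, sqrt_lt_R0; auto. }
  specialize (P1 _ Hmem). rewrite Q_scal in P1; auto.
  rewrite <- Rinv_pow, pow2_sqrt in P1; try lra. 2: apply Rgt_not_eq, sqrt_lt_R0; auto.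
  apply Rmult_le_compat_r with (r := N) in P1; try lra.
  replace (/ N * Qf W c psi a b * N) with (Qf W c psi a b) in P1 by (field; lra). exact P1.
Qed.

Lemma young3 (u y z t : R) : 0 < t < 1 ->
  (1 - t) * u ^ 2 + (1 - / t) * (2 * y ^ 2 + 2 * z ^ 2) <= (u + y + z) ^ 2.
Proof.
  intros Ht. set (k := / t). assert (Hk : t * k = 1) by (unfold k; field; lra).
  assert (Hk1 : 1 <= k). { unfold k. rewrite <- Rinv_1. apply Rinv_le_contravar; lra. }
  clearbody k.
  assert (A : (1 - t) * u ^ 2 + (1 - k) * (y + z) ^ 2 <= (u + y + z) ^ 2).
  { assert (0 <= k * (t * u + (y + z)) ^ 2) by (apply Rmult_le_pos; [lra | apply pow2_ge_0]).
    assert (E : (u + y + z) ^ 2 - ((1 - t) * u ^ 2 + (1 - k) * (y + z) ^ 2) = k * (t * u + (y + z)) ^ 2).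
    { replace (k * (t * u + (y + z)) ^ 2) with ((k * t) * t * u ^ 2 + 2 * (t * k) * u * (y + z) + k * (y + z) ^ 2) by ring.
      replace (k * t) with 1 by lra. rewrite Hk. ring. }
    lra. }
  assert (B : (y + z) ^ 2 <= 2 * y ^ 2 + 2 * z ^ 2). { assert (0 <= (y - z) ^ 2) by apply pow2_ge_0. nra. }
  assert (C : 0 <= (k - 1) * (2 * y ^ 2 + 2 * z ^ 2 - (y + z) ^ 2)) by (apply Rmult_le_pos; lra).
  assert (D : (1 - k) * (2 * y ^ 2 + 2 * z ^ 2) <= (1 - k) * (y + z) ^ 2).
  { assert (E : (1 - k) * (y + z) ^ 2 - (1 - k) * (2 * y ^ 2 + 2 * z ^ 2) = (k - 1) * (2 * y ^ 2 + 2 * z ^ 2 - (y + z) ^ 2)) by ring. lra. }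
  lra.
Qed.

Lemma pt1 (W c A B u u' la la' lb lb' t : R) : 0 <= W -> 0 <= c -> 0 < t < 1 ->
  (1 - t) * (W * (u' ^ 2 + c * u ^ 2)) + (1 - / t) * (2 * A ^ 2 * (W * (la' ^ 2 + c * la ^ 2)) + 2 * B ^ 2 * (W * (lb' ^ 2 + c * lb ^ 2)))
  <= W * ((u' + A * la' + B * lb') ^ 2 + c * (u + A * la + B * lb) ^ 2).
Proof.
  intros HW Hc Ht.
  pose proof (young3 u' (A * la') (B * lb') t Ht) as Y1.
  pose proof (young3 u (A * la) (B * lb) t Ht) as Y2.
  apply Rmult_le_compat_l with (r := c) in Y2; auto.
  assert (Y3 : (1 - t) * u' ^ 2 + (1 - / t) * (2 * (A * la') ^ 2 + 2 * (B * lb') ^ 2) +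
     c * ((1 - t) * u ^ 2 + (1 - / t) * (2 * (A * la) ^ 2 + 2 * (B * lb) ^ 2)) <=
     (u' + A * la' + B * lb') ^ 2 + c * (u + A * la + B * lb) ^ 2) by lra.
  apply Rmult_le_compat_l with (r := W) in Y3; auto.
  eapply Rle_trans; [|exact Y3]. right. ring.
Qed.

Lemma pt2 (W A B u la lb t : R) : 0 <= W -> 0 < t < 1 ->
  (1 - t) * (W * u ^ 2) + (1 - / t) * (2 * A ^ 2 * (W * la ^ 2) + 2 * B ^ 2 * (W * lb ^ 2))
  <= W * (u + - A * la + - B * lb) ^ 2.
Proof.
  intros HW Ht.
  pose proof (young3 u (- A * la) (- B * lb) t Ht) as Y.
  apply Rmult_le_compat_l with (r := W) in Y; auto.
  eapply Rle_trans; [|exact Y]. right. ring.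
Qed.

Lemma lin3 (f g h : R -> R) (u v k1 k2 k3 : R) : (forall x, continuous f x) -> (forall x, continuous g x) -> (forall x, continuous h x) ->
  RInt (fun r => k1 * f r + (k2 * g r + k3 * h r)) u v = k1 * RInt f u v + (k2 * RInt g u v + k3 * RInt h u v).
Proof.
  intros Hf Hg Hh.
  rewrite (RInt_plusR (fun r => k1 * f r) (fun r => k2 * g r + k3 * h r)).
  rewrite RInt_scalR, RInt_lin; auto; apply exRI; auto.
  apply (ex_RInt_scal f u v k1); apply exRI; auto.
  apply exRI; intros; cont.
Qed.

Lemma bdry_ineq (d : nat) (c : R -> R) (a b : R) : 0 < a -> a < b -> (forall x, continuous c x) ->
  (forall r, a <= r <= b -> 0 < c r) -> forall eta, 0 < eta -> exists C, 0 <= C /\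
  forall phi, C1fun phi ->
  (lambda_D d c a b - eta) * Nf (fun r => r ^ (d - 1)) phi a b - C * (phi a ^ 2 + phi b ^ 2)
    <= Qf (fun r => r ^ (d - 1)) c phi a b.
Proof.
  intros Ha Hab Hc Hcp eta Heta.
  destruct (lamD_props d c a b Ha Hab Hc Hcp) as [_ [_ HL]].
  remember (lambda_D d c a b) as L eqn:HLdef.
  set (W := fun r : R => r ^ (d - 1)).
  assert (HW : forall x, continuous W x) by (intros; apply pw_cont).
  assert (HWp : forall x, a < x < b -> 0 <= W x) by (intros; apply pow_le; lra).
  assert (Hcn : forall x, a < x < b -> 0 <= c x) by (intros; apply Rlt_le, Hcp; lra).
  assert (Htau : 0 < b - a) by lra.
  pose proof pp_cont as Hpp.
  set (la := fun r => / (b - a) ^ 2 * G (-1 * r + b)).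
  set (la' := fun r => / (b - a) ^ 2 * (-1 * (2 * pp (-1 * r + b)))).
  set (lb := fun r => / (b - a) ^ 2 * G (1 * r + - a)).
  set (lb' := fun r => / (b - a) ^ 2 * (1 * (2 * pp (1 * r + - a)))).
  assert (Hla : C1fun la /\ forall x, Derive la x = la' x).
  { apply C1_intro. intros x; unfold la, la'. apply scal_deriv, Glin_deriv. intros; unfold la'; cont. }
  assert (Hlb : C1fun lb /\ forall x, Derive lb x = lb' x).
  { apply C1_intro. intros x; unfold lb, lb'. apply scal_deriv, Glin_deriv. intros; unfold lb'; cont. }
  destruct Hla as [Hla Hla']. destruct Hlb as [Hlb Hlb'].
  assert (Hlaa : la a = 1). { unfold la. rewrite G_pos by lra. replace (-1 * a + b) with (b - a) by ring. field. lra. }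
  assert (Hlab : la b = 0). { unfold la. rewrite G_neg by lra. ring. }
  assert (Hlba : lb a = 0). { unfold lb. rewrite G_neg by lra. ring. }
  assert (Hlbb : lb b = 1). { unfold lb. rewrite G_pos by lra. replace (1 * b + - a) with (b - a) by ring. field. lra. }
  pose proof (C1_cont _ Hla) as Hlac. pose proof (C1_dcont _ Hla) as Hlad.
  pose proof (C1_cont _ Hlb) as Hlbc. pose proof (C1_dcont _ Hlb) as Hlbd.
  clearbody la la' lb lb'.
  remember (Qf W c la a b) as Qa eqn:HQad. remember (Qf W c lb a b) as Qb eqn:HQbd.
  remember (Nf W la a b) as Na eqn:HNad. remember (Nf W lb a b) as Nb eqn:HNbd.
  assert (HQa : 0 <= Qa) by (subst; apply Q_nonneg; auto; lra).
  assert (HQb : 0 <= Qb) by (subst; apply Q_nonneg; auto; lra).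
  assert (HNa : 0 <= Na) by (subst; apply N_nonneg; auto; lra).
  assert (HNb : 0 <= Nb) by (subst; apply N_nonneg; auto; lra).
  set (th := eta / (2 * L + 2 + eta)).
  assert (Hth : 0 < th < 1). { unfold th. split. apply Rdiv_lt_0_compat; lra.
    apply Rmult_lt_reg_r with (2 * L + 2 + eta). lra. unfold Rdiv. rewrite Rmult_assoc, Rinv_l; lra. }
  assert (Hth3 : th * (2 * L + 2 + eta) = eta) by (unfold th; field; lra).
  clearbody th.
  assert (Hth2 : 2 * th * L <= eta) by nra.
  remember (/ th) as k eqn:Hkd. assert (Hk : th * k = 1) by (rewrite Hkd; field; lra).
  assert (Hk0 : 0 < k) by (rewrite Hkd; apply Rinv_0_lt_compat; lra).
  exists (2 * k * (L * (Na + Nb) + Qa + Qb)). split.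
  { apply Rmult_le_pos. lra. nra. }
  intros phi Hphi.
  pose proof (C1_cont _ Hphi) as Hpc. pose proof (C1_dcont _ Hphi) as Hpd.
  remember (phi a) as A eqn:HA. remember (phi b) as B eqn:HB.
  set (psi := fun r => phi r + - A * la r + - B * lb r).
  assert (Hpsi : C1fun psi /\ forall x, Derive psi x = Derive phi x + - A * Derive la x + - B * Derive lb x).
  { apply C1_intro. intros x. unfold psi. apply plus_deriv. apply plus_deriv. apply C1_der; auto.
    apply scal_deriv, C1_der; auto. apply scal_deriv, C1_der; auto. intros; cont. }
  destruct Hpsi as [Hpsi Hpsi'].
  pose proof (C1_cont _ Hpsi) as Hqc. pose proof (C1_dcont _ Hpsi) as Hqd.
  assert (Hpsia : psi a = 0) by (unfold psi; rewrite Hlaa, Hlba, HA; ring).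
  assert (Hpsib : psi b = 0) by (unfold psi; rewrite Hlab, Hlbb, HB; ring).
  pose proof (Dir_ineq d c a b psi Ha Hab Hc Hcp Hpsi Hpsia Hpsib) as HD. rewrite <- HLdef in HD. fold W in HD.
  assert (H1 : (1 - th) * Qf W c psi a b + ((1 - k) * (2 * A ^ 2) * Qa + (1 - k) * (2 * B ^ 2) * Qb) <= Qf W c phi a b).
  { rewrite HQad, HQbd. unfold Qf. rewrite <- lin3; try (intros; cont).
    apply RInt_leR. lra. intros; cont. intros; cont.
    intros r Hr. pose proof (pt1 (W r) (c r) A B (psi r) (Derive psi r) (la r) (Derive la r) (lb r) (Derive lb r) th (HWp r Hr) (Hcn r Hr) Hth) as P.
    replace (Derive psi r + A * Derive la r + B * Derive lb r) with (Derive phi r) in P by (rewrite Hpsi'; ring).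
    replace (psi r + A * la r + B * lb r) with (phi r) in P by (unfold psi; ring).
    rewrite <- Hkd in P. eapply Rle_trans; [|exact P]. right. ring. }
  assert (H2 : (1 - th) * Nf W phi a b + ((1 - k) * (2 * A ^ 2) * Na + (1 - k) * (2 * B ^ 2) * Nb) <= Nf W psi a b).
  { rewrite HNad, HNbd. unfold Nf. rewrite <- lin3; try (intros; cont).
    apply RInt_leR. lra. intros; cont. intros; cont.
    intros r Hr. pose proof (pt2 (W r) A B (phi r) (la r) (lb r) th (HWp r Hr) Hth) as P.
    rewrite <- Hkd in P. unfold psi. eapply Rle_trans; [|exact P]. right. ring. }
  assert (HNp : 0 <= Nf W phi a b) by (apply N_nonneg; auto; lra).

  clearbody psi W.
  remember (Qf W c phi a b) as X. remember (Qf W c psi a b) as P.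
  remember (Nf W phi a b) as Np. remember (Nf W psi a b) as Nq.
  assert (HS1 : 0 <= 2 * A ^ 2 * Qa + 2 * B ^ 2 * Qb) by nra.
  assert (HS2 : 0 <= 2 * A ^ 2 * Na + 2 * B ^ 2 * Nb) by nra.
  remember (2 * A ^ 2 * Qa + 2 * B ^ 2 * Qb) as S1. remember (2 * A ^ 2 * Na + 2 * B ^ 2 * Nb) as S2.
  assert (E1 : (1 - k) * (2 * A ^ 2) * Qa + (1 - k) * (2 * B ^ 2) * Qb = (1 - k) * S1) by (subst; ring).
  assert (E2 : (1 - k) * (2 * A ^ 2) * Na + (1 - k) * (2 * B ^ 2) * Nb = (1 - k) * S2) by (subst; ring).
  rewrite E1 in H1. rewrite E2 in H2.
  assert (Hk1 : 1 <= k). { rewrite Hkd. rewrite <- Rinv_1. apply Rinv_le_contravar; lra. }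
  assert (s2 : (1 - th) * (L * Nq) <= (1 - th) * P) by (apply Rmult_le_compat_l; lra).
  assert (s3 : L * ((1 - th) * Np + (1 - k) * S2) <= L * Nq) by (apply Rmult_le_compat_l; lra).
  assert (s4 : (1 - th) * (L * ((1 - th) * Np + (1 - k) * S2)) <= (1 - th) * (L * Nq)) by (apply Rmult_le_compat_l; lra).
  assert (s5 : (L - eta) * Np <= (1 - th) * (1 - th) * L * Np).
  { apply Rmult_le_compat_r; auto. nra. }
  assert (s6 : - k * (L * S2) <= (1 - th) * (1 - k) * (L * S2)).
  { apply Rmult_le_compat_r. nra. nra. }
  assert (s7 : - k * S1 <= (1 - k) * S1) by (apply Rmult_le_compat_r; lra).
  assert (s8 : k * (L * S2) + k * S1 <= 2 * k * (L * (Na + Nb) + Qa + Qb) * (A ^ 2 + B ^ 2)).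
  { subst S1 S2. assert (0 <= k * L * (A^2 * Nb + B^2 * Na) + k * (A^2 * Qb + B^2 * Qa)).
    { apply Rplus_le_le_0_compat. apply Rmult_le_pos. nra. nra. apply Rmult_le_pos. lra. nra. }
    nra. }
  assert (E3 : (1 - th) * (L * ((1 - th) * Np + (1 - k) * S2)) = (1 - th) * (1 - th) * L * Np + (1 - th) * (1 - k) * (L * S2)) by ring.
  lra.
Qed.


Lemma exp_le (x y : R) : x <= y -> exp x <= exp y.
Proof. intros [H|H]. left; apply exp_increasing; auto. right; subst; auto. Qed.

Lemma pow_le1 (x : R) (n : nat) : 0 <= x <= 1 -> x ^ n <= 1.
Proof. intros H; induction n; simpl. lra. assert (0 <= x ^ n) by (apply pow_le; lra). nra. Qed.

Lemma pow_decr (x : R) (n k : nat) : 0 <= x <= 1 -> x ^ (n + k) <= x ^ n.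
Proof.
  intros H. rewrite pow_add. assert (0 <= x ^ n) by (apply pow_le; lra).
  assert (x ^ k <= 1) by (apply pow_le1; auto). assert (0 <= x ^ k) by (apply pow_le; lra). nra.
Qed.

Lemma pow_decr' (x : R) (n m : nat) : 0 <= x <= 1 -> (n <= m)%nat -> x ^ m <= x ^ n.
Proof. intros H Hnm. replace m with (n + (m - n))%nat by lia. apply pow_decr; auto. Qed.

Lemma xs_S (de al be : R) (l n : nat) : xs de al be l (S n) = xs de al be l n + (al ^ (S n + l) + be ^ (S n + l)).
Proof. simpl. ring. Qed.

Lemma xs_sum (de al be : R) (l n : nat) :
  xs de al be l (S n) = de + sum_n (fun i => al ^ (S i + l) + be ^ (S i + l)) n.
Proof.
  induction n. rewrite sum_O. simpl. ring.
  rewrite sum_Sn, xs_S, IHn. unfold plus; simpl. ring.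
Qed.

Lemma xs_lim (de al be a : R) (l : nat) :
  is_series (fun i => al ^ (S i + l) + be ^ (S i + l)) (a - de) -> is_lim_seq (xs de al be l) a.
Proof.
  intros Hs. apply is_lim_seq_incr_1.
  apply is_lim_seq_ext with (fun n => de + sum_n (fun i => al ^ (S i + l) + be ^ (S i + l)) n).
  intros; rewrite xs_sum; auto.
  replace a with (de + (a - de)) by ring. apply is_lim_seq_plus'. apply is_lim_seq_const. exact Hs.
Qed.

Lemma xs_incr (de al be : R) (l n : nat) : 0 < al -> 0 < be -> xs de al be l n < xs de al be l (S n).
Proof.
  intros. rewrite xs_S. assert (0 < al ^ (S n + l)) by (apply pow_lt; auto).
  assert (0 < be ^ (S n + l)) by (apply pow_lt; auto). lra.
Qed.

Lemma xs_mono (de al be : R) (l n k : nat) : 0 < al -> 0 < be -> xs de al be l n <= xs de al be l (k + n).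
Proof.
  intros. induction k. simpl; lra. apply Rle_trans with (1 := IHk). left. apply xs_incr; auto.
Qed.

Lemma xs_le_a (de al be a : R) (l n : nat) : 0 < al -> 0 < be ->
  is_series (fun i => al ^ (S i + l) + be ^ (S i + l)) (a - de) -> xs de al be l n < a.
Proof.
  intros Ha Hb Hs. pose proof (xs_lim de al be a l Hs) as HL.
  apply Rlt_le_trans with (xs de al be l (S n)). apply xs_incr; auto.
  apply (is_lim_seq_incr_n _ (S n)) in HL.
  assert (H := is_lim_seq_le (fun _ => xs de al be l (S n)) (fun k => xs de al be l (k + S n)) _ _
    (fun k => xs_mono de al be l (S n) k Ha Hb) (is_lim_seq_const _) HL).
  simpl in H. exact H.
Qed.

Lemma xs_exceeds (de al be a r : R) (l : nat) :
  is_series (fun i => al ^ (S i + l) + be ^ (S i + l)) (a - de) -> r < a -> exists K, r < xs de al be l K.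
Proof.
  intros Hs Hr. pose proof (xs_lim de al be a l Hs) as HL.
  apply is_lim_seq_spec in HL.
  destruct (HL (mkposreal (a - r) ltac:(lra))) as [N HN].
  exists N. specialize (HN N (Nat.le_refl N)). simpl in HN.
  apply Rabs_def2 in HN. lra.
Qed.

Lemma xs_tail (de al be a : R) (l n : nat) : 0 < al -> al < be -> be < 1 ->
  is_series (fun i => al ^ (S i + l) + be ^ (S i + l)) (a - de) ->
  a - xs de al be l n <= 2 * be ^ n / (1 - be).
Proof.
  intros Ha Hab Hb Hs.
  assert (Hk : forall k, xs de al be l (k + n) - xs de al be l n <= 2 * be ^ n / (1 - be) - 2 * be ^ (k + n) / (1 - be)).
  { induction k. simpl. lra.
    replace (S k + n)%nat with (S (k + n)) by lia. rewrite xs_S.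
    assert (H1 : al ^ (S (k + n) + l) <= be ^ (k + n)).
    { apply Rle_trans with (be ^ (S (k + n) + l)). apply pow_incr; lra.
      replace (S (k + n) + l)%nat with ((k + n) + S l)%nat by lia. apply pow_decr; lra. }
    assert (H2 : be ^ (S (k + n) + l) <= be ^ (k + n)).
    { replace (S (k + n) + l)%nat with ((k + n) + S l)%nat by lia. apply pow_decr; lra. }
    assert (E : 2 * be ^ n / (1 - be) - 2 * be ^ (S (k + n)) / (1 - be) =
                2 * be ^ n / (1 - be) - 2 * be ^ (k + n) / (1 - be) + 2 * be ^ (k + n)).
    { simpl. field. lra. }
    rewrite E. lra. }
  pose proof (xs_lim de al be a l Hs) as HL. apply (is_lim_seq_incr_n _ n) in HL.
  assert (Hle : forall k, xs de al be l (k + n) <= xs de al be l n + 2 * be ^ n / (1 - be)).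
  { intros k. specialize (Hk k). assert (0 <= 2 * be ^ (k + n) / (1 - be)).
    { apply Rmult_le_pos. assert (0 <= be ^ (k + n)) by (apply pow_le; lra). lra. left; apply Rinv_0_lt_compat; lra. }
    lra. }
  assert (H := is_lim_seq_le (fun k => xs de al be l (k + n)) (fun _ => xs de al be l n + 2 * be ^ n / (1 - be)) _ _
    Hle HL (is_lim_seq_const _)).
  simpl in H. lra.
Qed.

Definition trace_hyp (M : R -> R) (a de h al be nu : R) (l : nat) : Prop :=
  0 < de /\ 0 < h /\ h < al /\ al < be /\ be < 1 /\ 1 < nu /\
  is_series (fun i => al ^ (S i + l) + be ^ (S i + l)) (a - de) /\
  (forall x, continuous M x) /\ 0 <= M a /\
  (forall n r, xs de al be l n <= r < ys de al be l n -> - h ^ n <= M r) /\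
  (forall n r, ys de al be l n <= r < xs de al be l (S n) -> nu * h ^ n <= M r).

Lemma find_piece (de al be : R) (l n : nat) (r : R) : 0 < al -> 0 < be ->
  forall j, xs de al be l n <= r -> r < xs de al be l (j + n) ->
  exists k, (n <= k)%nat /\ xs de al be l k <= r < xs de al be l (S k).
Proof.
  intros Ha Hb j. induction j; intros H1 H2. simpl in H2; lra.
  destruct (Rlt_le_dec r (xs de al be l (j + n))) as [H3|H3]. apply IHj; auto.
  exists (j + n)%nat. split. lia. split; auto.
Qed.

Lemma M_lower (M : R -> R) (a de h al be nu : R) (l : nat) : trace_hyp M a de h al be nu l ->
  forall n r, xs de al be l n <= r <= a -> - h ^ n <= M r.
Proof.
  intros [Hde [Hh [Hha [Hab [Hb [Hnu [Hs [HM [HMa [HX HY]]]]]]]]]] n r [Hr1 Hr2].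
  assert (Hal : 0 < al) by lra. assert (Hbe : 0 < be) by lra.
  assert (Hhn : 0 <= h ^ n) by (apply pow_le; lra).
  destruct (Req_dec r a) as [E|E]. subst; lra.
  destruct (xs_exceeds de al be a r l Hs) as [K HK]. lra.
  destruct (Compare_dec.le_lt_dec K n) as [HKn|HKn].
  { exfalso. pose proof (xs_mono de al be l K (n - K) Hal Hbe). replace (n - K + K)%nat with n in H by lia. lra. }
  replace K with ((K - n) + n)%nat in HK by lia.
  destruct (find_piece de al be l n r Hal Hbe _ Hr1 HK) as [k [Hk1 [Hk2 Hk3]]].
  destruct (Rlt_le_dec r (ys de al be l k)) as [Hy|Hy].
  - apply Rle_trans with (- h ^ k). assert (h ^ k <= h ^ n) by (apply pow_decr'; auto; lra). lra.
    apply HX; lra.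
  - apply Rle_trans with (nu * h ^ k). assert (0 <= h ^ k) by (apply pow_le; lra). nra.
    apply HY; lra.
Qed.

Lemma cs_pt (E F u k : R) : E * F = 1 -> 0 < F -> 2 * k * u <= E * u ^ 2 + k ^ 2 * F.
Proof.
  intros H HF. assert (0 <= F * (E * u - k) ^ 2) by (apply Rmult_le_pos; [lra| apply pow2_ge_0]).
  assert (F * (E * u - k) ^ 2 = (E * F) * (E * u ^ 2) - 2 * (E * F) * k * u + F * k ^ 2) by ring.
  rewrite H in H1. lra.
Qed.


Ltac cb := repeat match goal with x := _ |- _ => subst x end.
Ltac lra2 := cb; lra.
Ltac nra2 := cb; nra.

Lemma sq_lem (u v : R) : 4 * v ^ 2 < u ^ 2 -> u ^ 2 / 4 <= (u - v) ^ 2.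
Proof.
  intros H. assert (E : (u - v) ^ 2 - u ^ 2 / 4 = (u / 2 - v) * (3 * u / 2 - v)) by field.
  destruct (Rle_dec 0 u).
  - assert (v < u / 2). { destruct (Rlt_le_dec v (u / 2)); auto. assert (0 <= u / 2) by lra. assert ((u/2)^2 <= v^2) by (apply pow_incr; lra). lra. }
    assert (0 <= (u / 2 - v) * (3 * u / 2 - v)) by (apply Rmult_le_pos; lra). lra.
  - assert (u / 2 < v). { destruct (Rlt_le_dec (u / 2) v); auto. assert (0 <= - (u / 2)) by lra. assert ((-(u/2))^2 <= (- v)^2) by (apply pow_incr; lra). lra. }
    assert (0 <= (u / 2 - v) * (3 * u / 2 - v)). { replace ((u / 2 - v) * (3 * u / 2 - v)) with ((v - u / 2) * (v - 3 * u / 2)) by ring. apply Rmult_le_pos; lra. }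
    lra.
Qed.

Lemma core (M : R -> R) (a de h al be nu : R) (l : nat) (mu s : R) (n : nat) (psi : R -> R) (K : R) :
  trace_hyp M a de h al be nu l -> 0 < mu -> 0 <= s -> C1fun psi ->
  K <= be ^ (n + l + 1) / 2 * exp (2 * s * (nu * h ^ n)) * mu / 4 ->
  K <= / (4 * ((a - xs de al be l n) * exp (2 * s * h ^ (S n)))) ->
  K * psi a ^ 2 <= RInt (fun r => exp (2 * s * M r) * (Derive psi r ^ 2 + mu * psi r ^ 2)) de a.
Proof.
  intros TH Hmu Hs Hpsi HK1 HK2.
  pose proof TH as [Hde [Hh [Hha [Hab [Hb [Hnu [Hs' [HM [HMa [HX HY]]]]]]]]]].
  assert (Hal : 0 < al) by lra2. assert (Hbe : 0 < be) by lra2.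
  pose proof (C1_cont _ Hpsi) as Hpc. pose proof (C1_dcont _ Hpsi) as Hpd.
  set (f := fun r => exp (2 * s * M r) * (Derive psi r ^ 2 + mu * psi r ^ 2)).
  assert (Hfc : forall x, continuous f x) by (intros; unfold f; cont).
  assert (Hfp : forall x, 0 <= f x).
  { intros x; unfold f. apply Rmult_le_pos. left; apply exp_pos.
    assert (0 <= Derive psi x ^ 2) by apply pow2_ge_0. assert (0 <= psi x ^ 2) by apply pow2_ge_0. nra2. }
  assert (Hx0 : de <= xs de al be l n).
  { pose proof (xs_mono de al be l 0 n Hal Hbe). replace (n + 0)%nat with n in H by lia. simpl in H. lra2. }
  assert (Hxa : xs de al be l (S n) < a) by (apply xs_le_a; auto).
  assert (HxS : xs de al be l (S n) = ys de al be l n + be ^ (n + l + 1)).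
  { rewrite xs_S. unfold ys. replace (S n + l)%nat with (n + l + 1)%nat by lia. ring. }
  assert (Hy0 : xs de al be l n < ys de al be l n).
  { unfold ys. assert (0 < al ^ (n + l + 1)) by (apply pow_lt; lra2). lra2. }
  assert (Hbp : 0 < be ^ (n + l + 1)) by (apply pow_lt; lra2).
  set (y := ys de al be l n) in *. set (z := y + be ^ (n + l + 1) / 2).
  assert (Hsh : 0 <= h ^ n) by (apply pow_le; lra2).
  destruct (classic (exists p, y <= p <= z /\ 4 * psi p ^ 2 < psi a ^ 2)) as [[p [Hp1 Hp2]]|Hno].
  -
    set (Bb := (a - xs de al be l n) * exp (2 * s * h ^ (S n))).
    assert (HBb : 0 < Bb). { unfold Bb. apply Rmult_lt_0_compat. lra2. apply exp_pos. }
    set (I2 := RInt (fun r => exp (- (2 * s * M r))) p a).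
    assert (HI2 : I2 <= Bb).
    { unfold I2. apply Rle_trans with (RInt (fun _ => exp (2 * s * h ^ (S n))) p a).
      apply RInt_leR. unfold z in Hp1; lra2. intros; cont. intros; cont.
      intros r Hr. apply exp_le. assert (- h ^ (S n) <= M r).
      { destruct (Rlt_le_dec r (xs de al be l (S n))).
        assert (nu * h ^ n <= M r) by (apply HY; lra2). assert (0 <= h ^ S n) by (apply pow_le; lra2). nra2.
        apply (M_lower M a de h al be nu l TH); lra2. }
      nra2.
      rewrite RInt_const. unfold Bb, scal; simpl; unfold mult; simpl. apply Rmult_le_compat_r.
      left; apply exp_pos. lra2. }
    set (I1 := RInt (fun r => exp (2 * s * M r) * Derive psi r ^ 2) p a).
    assert (Hkey : forall k, 2 * k * (psi a - psi p) <= I1 + k ^ 2 * I2).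
    { intros k. assert (E1 : RInt (fun r => 2 * k * Derive psi r) p a = 2 * k * (psi a - psi p)).
      { rewrite RInt_scalR. rewrite RInt_Derive. toR; ring. intros; apply Hpsi. intros; apply Hpd. apply exRI; auto. }
      rewrite <- E1. unfold I1, I2.
      replace (RInt (fun r => exp (2 * s * M r) * Derive psi r ^ 2) p a + k ^ 2 * RInt (fun r => exp (- (2 * s * M r))) p a)
        with (1 * RInt (fun r => exp (2 * s * M r) * Derive psi r ^ 2) p a + k ^ 2 * RInt (fun r => exp (- (2 * s * M r))) p a) by ring.
      rewrite <- RInt_lin. apply RInt_leR. unfold z in Hp1; lra2. intros; cont. intros; cont.
      intros r _. rewrite Rmult_1_l. replace (exp (2 * s * M r) * Derive psi r ^ 2) with (exp (2 * s * M r) * Derive psi r ^ 2) by ring.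
      apply cs_pt. rewrite <- exp_plus. replace (2 * s * M r + - (2 * s * M r)) with 0 by ring. apply exp_0. apply exp_pos.
      apply exRI; intros; cont. apply exRI; intros; cont. }
    set (D := psi a - psi p).
    specialize (Hkey (D / Bb)).
    assert (HD : psi a ^ 2 / 4 <= D ^ 2) by (unfold D; apply sq_lem; auto).
    assert (HI1 : D ^ 2 / Bb <= I1).
    { assert (D ^ 2 / Bb ^ 2 * I2 <= D ^ 2 / Bb ^ 2 * Bb).
      { apply Rmult_le_compat_l; auto. unfold Rdiv. apply Rmult_le_pos. apply pow2_ge_0.
        left; apply Rinv_0_lt_compat, pow_lt; auto. }
      replace (2 * (D / Bb) * D) with (2 * (D ^ 2 / Bb)) in Hkey by (field; lra2).
      replace ((D / Bb) ^ 2 * I2) with (D ^ 2 / Bb ^ 2 * I2) in Hkey by (field; lra2).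
      replace (D ^ 2 / Bb ^ 2 * Bb) with (D ^ 2 / Bb) in H by (field; lra2). lra2. }
    assert (HI1f : I1 <= RInt f p a).
    { apply RInt_leR. unfold z in Hp1; lra2. intros; cont. auto.
      intros r _. unfold f. assert (0 <= psi r ^ 2) by apply pow2_ge_0.
      apply Rmult_le_compat_l. left; apply exp_pos. nra2. }
    assert (Hsub : RInt f p a <= RInt f de a).
    { apply RInt_sub; auto. lra2. unfold z in Hp1; lra2. lra2. }
    assert (HK3 : K * psi a ^ 2 <= psi a ^ 2 / 4 / Bb).
    { replace (psi a ^ 2 / 4 / Bb) with (/ (4 * Bb) * psi a ^ 2) by (field; lra2).
      rewrite Rmult_comm. rewrite (Rmult_comm _ (psi a ^ 2)). apply Rmult_le_compat_l. apply pow2_ge_0. exact HK2. }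
    assert (psi a ^ 2 / 4 / Bb <= D ^ 2 / Bb).
    { unfold Rdiv. apply Rmult_le_compat_r. left; apply Rinv_0_lt_compat; auto. lra2. }
    lra2.
  -
    assert (Hall : forall p, y <= p <= z -> psi a ^ 2 <= 4 * psi p ^ 2).
    { intros p Hp. apply Rnot_lt_le. intros Hc. apply Hno. exists p; split; auto. }
    set (T := exp (2 * s * (nu * h ^ n)) * (mu * (psi a ^ 2 / 4))).
    assert (H1 : RInt (fun _ => T) y z <= RInt f y z).
    { apply RInt_leR. unfold z; lra2. intros; cont. auto.
      intros r Hr. unfold T, f. apply Rmult_le_compat. left; apply exp_pos.
      apply Rmult_le_pos. lra2. assert (0 <= psi a ^ 2) by apply pow2_ge_0. lra2.
      apply exp_le. apply Rmult_le_compat_l. lra2. apply HY. unfold z in Hr. lra2.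
      assert (psi a ^ 2 <= 4 * psi r ^ 2) by (apply Hall; lra2).
      assert (0 <= Derive psi r ^ 2) by apply pow2_ge_0. nra2. }
    rewrite RInt_const in H1. unfold scal in H1; simpl in H1; unfold mult in H1; simpl in H1.
    assert (Hsub : RInt f y z <= RInt f de a).
    { apply RInt_sub; auto. lra2. unfold z; lra2. unfold z; lra2. }
    assert (E : (z - y) * T = be ^ (n + l + 1) / 2 * exp (2 * s * (nu * h ^ n)) * mu / 4 * psi a ^ 2).
    { unfold z, T. field. }
    apply Rle_trans with (be ^ (n + l + 1) / 2 * exp (2 * s * (nu * h ^ n)) * mu / 4 * psi a ^ 2).
    apply Rmult_le_compat_r. apply pow2_ge_0. auto. lra2.
Qed.


Lemma nat_arch (X : R) : exists N : nat, X <= INR N.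
Proof.
  destruct (archimed X) as [H1 _].
  destruct (Z_lt_le_dec (up X) 0) as [Hz|Hz].
  - exists 0%nat. simpl. apply IZR_lt in Hz. lra.
  - exists (Z.to_nat (up X)). rewrite INR_IZR_INZ, Z2Nat.id; auto. lra.
Qed.

Lemma powexp (x : R) (n : nat) : 0 < x -> x ^ n = exp (INR n * ln x).
Proof. intros H. rewrite <- ln_pow; auto. rewrite exp_ln; auto. apply pow_lt; auto. Qed.

Lemma search_trans (P : nat -> Prop) (N k : nat) : ~ P N -> P (k + N)%nat ->
  exists j, (N <= j)%nat /\ ~ P j /\ P (S j).
Proof.
  intros H0. induction k; intros Hk. simpl in Hk. contradiction.
  destruct (classic (P (k + N)%nat)) as [Hp|Hp].
  apply IHk; auto. exists (k + N)%nat. split. lia. split; auto.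
Qed.

Lemma trace_main (M : R -> R) (a de h al be nu : R) (l : nat) (mu : R) :
  trace_hyp M a de h al be nu l -> 0 < mu -> forall K, 0 < K -> exists s0, 0 < s0 /\
  forall s, s0 <= s -> forall psi, C1fun psi ->
  K * psi a ^ 2 <= RInt (fun r => exp (2 * s * M r) * (Derive psi r ^ 2 + mu * psi r ^ 2)) de a.
Proof.
  intros TH Hmu K HK.
  pose proof TH as [Hde [Hh [Hha [Hab [Hb [Hnu [Hs' [HM [HMa [HX HY]]]]]]]]]].
  assert (Hal : 0 < al) by lra. assert (Hbe : 0 < be) by lra.
  assert (Hlb : ln be < 0). { rewrite <- ln_1. apply ln_increasing; lra. }
  remember (mu * be ^ (l + 1) / 8) as c1 eqn:Hc1.
  assert (Hc1p : 0 < c1). { rewrite Hc1. assert (0 < be ^ (l + 1)) by (apply pow_lt; lra). nra. }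
  remember ((1 - be) / (8 * K)) as e1 eqn:He1.
  assert (He1p : 0 < e1). { rewrite He1. apply Rdiv_lt_0_compat; lra. }
  destruct (nat_arch ((ln (K / c1) - ln be - nu * ln e1) / ((nu - 1) * (- ln be)))) as [N HN].
  assert (HNq : ln (K / c1) - ln be - nu * ln e1 <= INR N * ((nu - 1) * (- ln be))).
  { assert (0 < (nu - 1) * (- ln be)) by nra.
    apply Rmult_le_compat_r with (r := (nu - 1) * (- ln be)) in HN; try lra.
    unfold Rdiv in HN. rewrite Rmult_assoc, Rinv_l in HN; lra. }
  set (P := fun (s : R) (j : nat) => be ^ j * exp (2 * s * h ^ (S j)) <= e1).
  assert (HhS : 0 < h ^ (S N)) by (apply pow_lt; lra).
  exists (Rmax 1 ((ln e1 - INR N * ln be) / (2 * h ^ (S N)) + 1)). split.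
  { apply Rlt_le_trans with 1. lra. apply Rmax_l. }
  intros s Hs psi Hpsi.
  assert (Hs1 : 1 <= s) by (eapply Rle_trans; [apply Rmax_l | exact Hs]).
  assert (Hs2 : (ln e1 - INR N * ln be) / (2 * h ^ (S N)) + 1 <= s) by (eapply Rle_trans; [apply Rmax_r | exact Hs]).
  assert (HnP : ~ P s N).
  { unfold P. intros HP. rewrite powexp in HP; auto. rewrite <- exp_plus in HP.
    rewrite <- (exp_ln e1) in HP; auto.
    assert (INR N * ln be + 2 * s * h ^ S N <= ln e1).
    { destruct HP as [HP|HP]. left; apply exp_lt_inv; auto. right; rewrite <- (ln_exp (INR N * ln be + 2 * s * h ^ S N)), HP, ln_exp; auto. }
    assert ((ln e1 - INR N * ln be) / (2 * h ^ (S N)) * (2 * h ^ (S N)) = ln e1 - INR N * ln be) by (field; lra).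
    assert (((ln e1 - INR N * ln be) / (2 * h ^ (S N)) + 1) * (2 * h ^ (S N)) <= s * (2 * h ^ (S N))).
    { apply Rmult_le_compat_r; lra. }
    nra. }
  assert (HexP : exists m, P s (m + N)%nat).
  { destruct (pow_lt_1_zero be ltac:(rewrite Rabs_pos_eq; lra) (e1 * exp (- (2 * s)))) as [m0 Hm0].
    apply Rmult_lt_0_compat; auto; apply exp_pos.
    exists m0. unfold P. specialize (Hm0 (m0 + N)%nat ltac:(lia)).
    rewrite Rabs_pos_eq in Hm0 by (apply pow_le; lra).
    assert (exp (2 * s * h ^ S (m0 + N)) <= exp (2 * s)).
    { apply exp_le. assert (h ^ S (m0 + N) <= 1) by (apply pow_le1; lra). nra. }
    assert (0 <= be ^ (m0 + N)) by (apply pow_le; lra).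
    apply Rle_trans with (be ^ (m0 + N) * exp (2 * s)). apply Rmult_le_compat_l; auto.
    apply Rmult_lt_compat_r with (r := exp (2 * s)) in Hm0. 2: apply exp_pos.
    rewrite Rmult_assoc, <- exp_plus in Hm0. replace (- (2 * s) + 2 * s) with 0 in Hm0 by ring.
    rewrite exp_0 in Hm0. lra. }
  destruct HexP as [m Hm].
  destruct (search_trans (P s) N m HnP Hm) as [j [Hj1 [Hj2 Hj3]]].
  apply (core M a de h al be nu l mu s (S j) psi K TH Hmu ltac:(lra) Hpsi).
  -
    unfold P in Hj2. apply Rnot_le_lt in Hj2.
    rewrite powexp in Hj2; auto. rewrite <- exp_plus in Hj2. rewrite <- (exp_ln e1) in Hj2; auto.
    apply exp_lt_inv in Hj2.
    replace (be ^ (S j + l + 1) / 2 * exp (2 * s * (nu * h ^ S j)) * mu / 4) with (c1 * exp (INR (S j) * ln be + nu * (2 * s * h ^ S j))).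
    2: { rewrite Hc1. rewrite exp_plus. rewrite <- powexp; auto. replace (S j + l + 1)%nat with (S j + (l + 1))%nat by lia.
         rewrite (pow_add be (S j) (l + 1)). replace (nu * (2 * s * h ^ S j)) with (2 * s * (nu * h ^ S j)) by ring. field. }
    replace K with (c1 * exp (ln (K / c1))). 2: { rewrite exp_ln. field; lra. apply Rdiv_lt_0_compat; lra. }
    apply Rmult_le_compat_l. lra. apply exp_le.
    rewrite S_INR.
    assert (HjN : INR N <= INR j) by (apply le_INR; auto).
    assert (INR N * ((nu - 1) * - ln be) <= INR j * ((nu - 1) * - ln be)).
    { apply Rmult_le_compat_r; auto. nra. }
    assert (nu * (ln e1 - INR j * ln be) <= nu * (2 * s * h ^ S j)) by (apply Rmult_le_compat_l; lra).
    nra.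
  -
    unfold P in Hj3.
    pose proof (xs_tail de al be a l (S j) Hal Hab Hb Hs') as Ht.
    pose proof (xs_le_a de al be a l (S j) Hal Hbe Hs') as Hxa.
    set (X := (a - xs de al be l (S j)) * exp (2 * s * h ^ S (S j))).
    assert (HX0 : 0 < X). { unfold X. apply Rmult_lt_0_compat. lra. apply exp_pos. }
    assert (HKX : K * (4 * X) <= 1).
    { unfold X. assert (Hexp : 0 < exp (2 * s * h ^ S (S j))) by apply exp_pos.
      assert ((a - xs de al be l (S j)) * exp (2 * s * h ^ S (S j)) <= 2 * be ^ S j / (1 - be) * exp (2 * s * h ^ S (S j))).
      { apply Rmult_le_compat_r; lra. }
      assert (2 * be ^ S j / (1 - be) * exp (2 * s * h ^ S (S j)) = 2 / (1 - be) * (be ^ S j * exp (2 * s * h ^ S (S j)))) by (field; lra).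
      assert (2 / (1 - be) * (be ^ S j * exp (2 * s * h ^ S (S j))) <= 2 / (1 - be) * e1).
      { apply Rmult_le_compat_l; auto. apply Rlt_le, Rdiv_lt_0_compat; lra. }
      assert (K * (4 * (2 / (1 - be) * e1)) = 1) by (rewrite He1; field; lra).
      assert (K * (4 * ((a - xs de al be l (S j)) * exp (2 * s * h ^ S (S j)))) <= K * (4 * (2 / (1 - be) * e1))).
      { apply Rmult_le_compat_l. lra. lra. }
      lra. }
    apply Rmult_le_reg_r with (4 * X). lra. rewrite Rinv_l. lra. lra.
Qed.


Lemma cont_nbhd (f : R -> R) (x e : R) : 0 < e -> continuous f x -> locally x (fun y => Rabs (f y - f x) < e).
Proof.
  intros He Hc. apply (filterlim_locally f (f x)) with (eps := mkposreal e He) in Hc.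
  eapply filter_imp; [|exact Hc]. intros y Hy. exact Hy.
Qed.

Lemma loc_open (P : R -> Prop) (x : R) : open P -> P x -> locally x P.
Proof. intros H Hx; apply H; auto. Qed.

Lemma C1_loc (psi : R -> R) : (forall x, exists g, C1fun g /\ locally x (fun y => psi y = g y)) ->
  C1fun psi.
Proof.
  intros H. split.
  - intros x. destruct (H x) as [g [Hg Hl]]. exists (Derive g x).
    apply is_derive_ext_loc with g. eapply filter_imp; [|exact Hl]. intros; auto.
    apply C1_der; auto.
  - intros x. destruct (H x) as [g [Hg Hl]].
    apply continuous_ext_loc with (Derive g).
    apply locally_locally in Hl. eapply filter_imp; [|exact Hl]. intros y Hy.
    symmetry. apply Derive_ext_loc. exact Hy.
    apply C1_dcont; auto.
Qed.

Lemma Derive_loc (psi g : R -> R) (x : R) : locally x (fun y => psi y = g y) -> Derive psi x = Derive g x.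
Proof. intros; apply Derive_ext_loc; auto. Qed.

Lemma C1_zero : C1fun (fun _ => 0).
Proof. apply (C1_intro (fun _ => 0) (fun _ => 0)). intros; auto_derive; auto. intros; apply continuous_const. Qed.

Lemma C1_comp_F (e : R) (phi : R -> R) : 0 < e -> C1fun phi ->
  C1fun (fun y => F e (phi y)) /\ forall x, Derive (fun y => F e (phi y)) x = F' e (phi x) * Derive phi x.
Proof.
  intros He Hp. apply C1_intro.
  intros x. eapply is_derive_eq. apply (is_derive_comp (F e) phi). apply F_deriv; auto. apply C1_der; auto.
  unfold scal; simpl; unfold mult; simpl. ring.
  intros x. pose proof (C1_cont _ Hp). pose proof (C1_dcont _ Hp). pose proof (F'_cont e) as HF.
  cont.
Qed.

Lemma RInt_zero (f : R -> R) (u v : R) : u <= v -> (forall x, u < x < v -> f x = 0) -> RInt f u v = 0.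
Proof.
  intros Huv H. rewrite (RInt_ext f (fun _ => 0)). rewrite RInt_const. unfold scal; simpl; unfold mult; simpl. ring.
  intros x Hx. rewrite Rmin_left, Rmax_right in Hx; auto.
Qed.

Definition ES (d : nat) (m c : R -> R) (s : R) := fun q : R => exists phi : R -> R,
    C1fun phi /\
    RInt (fun r => r ^ (d - 1) * exp (2 * s * m r) * (phi r) ^ 2) 0 1 = 1 /\
    q = RInt (fun r => r ^ (d - 1) * exp (2 * s * m r) *
                       ((Derive phi r) ^ 2 + c r * (phi r) ^ 2)) 0 1.

Lemma split3 (f : R -> R) (a b : R) : (forall x, continuous f x) ->
  RInt f 0 1 = RInt f 0 a + RInt f a b + RInt f b 1.
Proof.
  intros H. rewrite (ChaslesR f 0 a b), (ChaslesR f 0 b 1); auto; apply exRI; auto.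
Qed.

Lemma upper (d : nat) (m c : R -> R) (a b : R) : 0 < a -> a < b -> b < 1 ->
  (forall x, continuous c x) -> (forall r, 0 <= r <= 1 -> 0 < c r) -> (forall x, continuous m x) ->
  (forall r, a <= r <= b -> m r = 0) ->
  forall q, ED d c a b q -> forall eps, 0 < eps -> forall s, exists x, ES d m c s x /\ x <= q + eps.
Proof.
  intros Ha Hab Hb1 Hc Hcp Hm Hm0 q [phi [Hphi [Hpa [Hpb [HNI Hq]]]]] eps Heps s.
  set (W := fun r : R => r ^ (d - 1)).
  assert (HW : forall x, continuous W x) by (intros; apply pw_cont).
  assert (HWp : forall x, 0 <= x -> 0 <= W x) by (intros; apply pow_le; lra).
  pose proof (C1_cont _ Hphi) as Hpc. pose proof (C1_dcont _ Hphi) as Hpd.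
  assert (Hq0 : 0 <= q). { rewrite Hq. change (0 <= Qf W c phi a b). apply Q_nonneg; auto. lra.
    intros x Hx; split. apply HWp; lra. apply Rlt_le, Hcp; lra. }
  set (Iw := RInt W a b).
  assert (HIw : 0 <= Iw). { unfold Iw. apply RInt_ge_0. lra. apply exRI; auto. intros; apply HWp; lra. }
  set (ka := 2 * (1 + Iw)).
  assert (Hka : 0 < ka) by (unfold ka; lra).
  set (e := eps / (2 * ka * (q + eps))).
  assert (He : 0 < e). { unfold e. apply Rdiv_lt_0_compat; auto. apply Rmult_lt_0_compat; lra. }
  assert (Hke : ka * e = eps / (2 * (q + eps))) by (unfold e; field; lra).
  assert (Hke2 : ka * e <= 1 / 2).
  { rewrite Hke. apply Rmult_le_reg_r with (2 * (q + eps)). lra. unfold Rdiv. rewrite Rmult_assoc, Rinv_l; lra. }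
  clearbody e.
  set (psi := fun r => if Rle_dec a r then if Rle_dec r b then F e (phi r) else 0 else 0).
  destruct (C1_comp_F e phi He Hphi) as [HFp HFd].
  assert (Hin : forall y, a < y < b -> psi y = F e (phi y)).
  { intros y Hy. unfold psi. destruct (Rle_dec a y); [|lra]. destruct (Rle_dec y b); [|lra]. auto. }
  assert (Hout : forall y, y < a \/ b < y -> psi y = 0).
  { intros y Hy. unfold psi. destruct (Rle_dec a y); auto. destruct (Rle_dec y b); auto. lra. }
  assert (Hend : forall x, phi x = 0 -> locally x (fun y => psi y = 0)).
  { intros x Hx. eapply filter_imp; [|apply (cont_nbhd phi x e He (Hpc x))].
    intros y Hy. rewrite Hx, Rminus_0_r in Hy.
    assert (F e (phi y) = 0) by (apply (F_props e (phi y) He); lra).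
    unfold psi. destruct (Rle_dec a y); auto. destruct (Rle_dec y b); auto. }
  assert (Hloc_in : forall x, a < x < b -> locally x (fun y => psi y = F e (phi y))).
  { intros x Hx. eapply filter_imp; [|apply (loc_open (fun y => a < y /\ y < b)); [apply open_and; [apply open_gt|apply open_lt]|exact Hx]].
    intros y Hy; apply Hin; auto. }
  assert (Hloc_out : forall x, x < a \/ b < x -> locally x (fun y => psi y = 0)).
  { intros x [Hx|Hx].
    eapply filter_imp; [|apply (loc_open (fun y => y < a)); [apply open_lt|exact Hx]]. intros y Hy; apply Hout; auto.
    eapply filter_imp; [|apply (loc_open (fun y => b < y)); [apply open_gt|exact Hx]]. intros y Hy; apply Hout; auto. }
  assert (Hpsi : C1fun psi).
  { apply C1_loc. intros x.
    destruct (Rlt_le_dec x a) as [H1|H1]. exists (fun _ => 0); split. apply C1_zero. apply Hloc_out; auto.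
    destruct (Req_dec x a) as [H2|H2]. exists (fun _ => 0); split. apply C1_zero. apply Hend; subst; auto.
    destruct (Rlt_le_dec x b) as [H3|H3]. exists (fun y => F e (phi y)); split; auto. apply Hloc_in; lra.
    destruct (Req_dec x b) as [H4|H4]. exists (fun _ => 0); split. apply C1_zero. apply Hend; subst; auto.
    exists (fun _ => 0); split. apply C1_zero. apply Hloc_out; lra. }
  assert (HDin : forall x, a < x < b -> Derive psi x = F' e (phi x) * Derive phi x).
  { intros x Hx. rewrite (Derive_loc psi _ x (Hloc_in x Hx)). apply HFd. }
  assert (HDout : forall x, x < a \/ b < x -> Derive psi x = 0).
  { intros x Hx. rewrite (Derive_loc psi _ x (Hloc_out x Hx)). apply Derive_const. }
  pose proof (C1_cont _ Hpsi) as Hqc. pose proof (C1_dcont _ Hpsi) as Hqd.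
  set (Ws := fun r => r ^ (d - 1) * exp (2 * s * m r)).
  assert (HWs : forall x, continuous Ws x) by (intros; unfold Ws; cont).
  set (nu0 := RInt (fun r => W r * F e (phi r) ^ 2) a b).
  set (Q0 := RInt (fun r => W r * ((F' e (phi r) * Derive phi r) ^ 2 + c r * F e (phi r) ^ 2)) a b).
  assert (HN : Nf Ws psi 0 1 = nu0).
  { unfold Nf. rewrite (split3 _ a b) by (intros; unfold Ws; cont).
    rewrite (RInt_zero _ 0 a), (RInt_zero _ b 1); try lra.
    rewrite Rplus_0_l, Rplus_0_r. apply RInt_ext. intros x Hx. rewrite Rmin_left, Rmax_right in Hx by lra.
    unfold Ws, W. rewrite Hin, Hm0 by lra. rewrite Rmult_0_r, exp_0. toR; ring.
    intros x Hx. rewrite Hout by lra. toR; ring. intros x Hx. rewrite Hout by lra. toR; ring. }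
  assert (HQ : Qf Ws c psi 0 1 = Q0).
  { unfold Qf. rewrite (split3 _ a b) by (intros; unfold Ws; cont).
    rewrite (RInt_zero _ 0 a), (RInt_zero _ b 1); try lra.
    rewrite Rplus_0_l, Rplus_0_r. apply RInt_ext. intros x Hx. rewrite Rmin_left, Rmax_right in Hx by lra.
    unfold Ws, W. rewrite HDin, Hin, Hm0 by lra. rewrite Rmult_0_r, exp_0. toR; ring.
    intros x Hx. rewrite HDout, Hout by lra. toR; ring. intros x Hx. rewrite HDout, Hout by lra. toR; ring. }
  assert (HQ0 : Q0 <= q).
  { rewrite Hq. unfold Q0. apply RInt_leR. lra. intros; pose proof (F'_cont e) as HF'. pose proof (fun x => C1_cont _ HFp x) as HF. cont.
    intros; cont.
    intros r Hr. destruct (F_props e (phi r) He) as [P1 [P2 _]].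
    assert (0 <= c r) by (apply Rlt_le, Hcp; lra). assert (0 <= W r) by (apply HWp; lra).
    change (r ^ (d - 1)) with (W r). apply Rmult_le_compat_l; auto.
    assert ((F' e (phi r) * Derive phi r) ^ 2 <= Derive phi r ^ 2).
    { rewrite Rpow_mult_distr. assert (0 <= Derive phi r ^ 2) by apply pow2_ge_0.
      assert (F' e (phi r) ^ 2 <= 1) by nra. nra. }
    assert (c r * F e (phi r) ^ 2 <= c r * phi r ^ 2) by (apply Rmult_le_compat_l; auto). lra. }
  assert (Hnu0 : 1 - ka * e <= nu0).
  { unfold nu0. apply Rle_trans with (RInt (fun r => (1 - 2 * e) * (W r * phi r ^ 2) + (- 2 * e) * W r) a b).
    rewrite RInt_lin. change (RInt (fun r => W r * phi r ^ 2) a b) with (RInt (fun r => r ^ (d - 1) * phi r ^ 2) a b).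
    rewrite HNI. fold Iw. unfold ka. lra. apply exRI; intros; cont. apply exRI; auto.
    apply RInt_leR. lra. intros; cont. intros; pose proof (fun x => C1_cont _ HFp x) as HF. cont.
    intros r Hr. destruct (F_props e (phi r) He) as [_ [_ [P3 _]]].
    assert (0 <= W r) by (apply HWp; lra).
    replace ((1 - 2 * e) * (W r * phi r ^ 2) + -2 * e * W r) with (W r * ((1 - 2 * e) * phi r ^ 2 - 2 * e)) by ring.
    apply Rmult_le_compat_l; auto. }
  assert (Hnp : 0 < nu0) by lra.
  clearbody nu0 Q0.
  destruct (C1_scal psi (/ sqrt nu0) Hpsi) as [H1 H2].
  exists (Qf Ws c (fun x => / sqrt nu0 * psi x) 0 1). split.
  { exists (fun x => / sqrt nu0 * psi x). split; auto. split; [|reflexivity].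
    change (Nf Ws (fun x => / sqrt nu0 * psi x) 0 1 = 1).
    rewrite N_scal, HN; auto. rewrite <- Rinv_pow, pow2_sqrt; try lra.
    apply Rinv_l; lra. apply Rgt_not_eq, sqrt_lt_R0; auto. }
  rewrite Q_scal, HQ; auto. rewrite <- Rinv_pow, pow2_sqrt; try lra. 2: apply Rgt_not_eq, sqrt_lt_R0; auto.
  assert (A1 : / nu0 * Q0 <= / nu0 * q) by (apply Rmult_le_compat_l; [left; apply Rinv_0_lt_compat|]; lra).
  assert (A2 : / nu0 * q <= q / (1 - ka * e)).
  { unfold Rdiv. rewrite Rmult_comm. apply Rmult_le_compat_l; auto. apply Rinv_le_contravar; lra. }
  assert (A3 : q / (1 - ka * e) <= q + eps).
  { apply Rmult_le_reg_r with (1 - ka * e). lra. unfold Rdiv. rewrite Rmult_assoc, Rinv_l by lra.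
    rewrite Hke. replace ((q + eps) * (1 - eps / (2 * (q + eps)))) with (q + eps / 2) by (field; lra). lra. }
  lra.
Qed.


Lemma reflect (f : R -> R) (p q : R) : (forall x, continuous f x) ->
  RInt f (1 - q) (1 - p) = RInt (fun t => f (1 - t)) p q.
Proof.
  intros Hf.
  pose proof (RInt_comp_lin f (-1) 1 p q (exRI _ _ _ Hf)) as H.
  replace (-1 * p + 1) with (1 - p) in H by ring. replace (-1 * q + 1) with (1 - q) in H by ring.
  rewrite <- (opp_RInt_swap f (1 - p) (1 - q)) by (apply exRI; auto).
  rewrite <- H.
  rewrite (RInt_ext (fun y => scal (-1) (f (-1 * y + 1))) (fun y => -1 * f (1 - y))).
  rewrite RInt_scalR. unfold opp; simpl. toR; ring. apply exRI; intros; cont.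
  intros x _. unfold scal; simpl; unfold mult; simpl. replace (-1 * x + 1) with (1 - x) by ring. reflexivity.
Qed.

Lemma C1_refl (phi : R -> R) : C1fun phi -> C1fun (fun t => phi (1 - t)) /\ forall t, Derive (fun t => phi (1 - t)) t = - Derive phi (1 - t).
Proof.
  intros H. apply C1_intro.
  intros x. eapply is_derive_eq. apply (is_derive_comp phi (fun t => 1 - t)). apply C1_der; auto.
  auto_derive; auto. unfold scal; simpl; unfold mult; simpl. ring.
  intros x. pose proof (C1_dcont _ H). cont.
Qed.

Lemma left_est (d : nat) (m c phi : R -> R) (a de L mu s K : R) :
  (forall x, continuous c x) -> (forall x, continuous m x) -> C1fun phi -> 0 < de -> de < a -> 0 < mu ->
  (forall r, 0 <= r <= a -> L + mu <= c r) ->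
  K * phi a ^ 2 <= RInt (fun r => exp (2 * s * m r) * (Derive phi r ^ 2 + mu * phi r ^ 2)) de a ->
  L * RInt (fun r => r ^ (d - 1) * exp (2 * s * m r) * phi r ^ 2) 0 a + de ^ (d - 1) * K * phi a ^ 2 <=
  RInt (fun r => r ^ (d - 1) * exp (2 * s * m r) * (Derive phi r ^ 2 + c r * phi r ^ 2)) 0 a.
Proof.
  intros Hc Hm Hphi Hde Hda Hmu Hcl HK.
  pose proof (C1_cont _ Hphi) as Hpc. pose proof (C1_dcont _ Hphi) as Hpd.
  assert (Hw : forall r, 0 <= r -> 0 <= r ^ (d - 1) * exp (2 * s * m r)).
  { intros r Hr. apply Rmult_le_pos. apply pow_le; auto. left; apply exp_pos. }
  assert (H1 : RInt (fun r => L * (r ^ (d - 1) * exp (2 * s * m r) * phi r ^ 2) + 1 * (r ^ (d - 1) * exp (2 * s * m r) * (Derive phi r ^ 2 + mu * phi r ^ 2))) 0 a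
    <= RInt (fun r => r ^ (d - 1) * exp (2 * s * m r) * (Derive phi r ^ 2 + c r * phi r ^ 2)) 0 a).
  { apply RInt_leR. lra. intros; cont. intros; cont. intros r Hr.
    assert (0 <= r ^ (d - 1) * exp (2 * s * m r) * phi r ^ 2).
    { apply Rmult_le_pos. apply Hw; lra. apply pow2_ge_0. }
    assert (L + mu <= c r) by (apply Hcl; lra).
    assert (E : r ^ (d - 1) * exp (2 * s * m r) * (Derive phi r ^ 2 + c r * phi r ^ 2) -
      (L * (r ^ (d - 1) * exp (2 * s * m r) * phi r ^ 2) + 1 * (r ^ (d - 1) * exp (2 * s * m r) * (Derive phi r ^ 2 + mu * phi r ^ 2)))
      = (r ^ (d - 1) * exp (2 * s * m r) * phi r ^ 2) * (c r - L - mu)) by ring.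
    assert (0 <= (r ^ (d - 1) * exp (2 * s * m r) * phi r ^ 2) * (c r - L - mu)) by (apply Rmult_le_pos; lra).
    lra. }
  rewrite RInt_lin in H1 by (apply exRI; intros; cont).
  assert (H2 : RInt (fun r => r ^ (d - 1) * exp (2 * s * m r) * (Derive phi r ^ 2 + mu * phi r ^ 2)) de a <=
               RInt (fun r => r ^ (d - 1) * exp (2 * s * m r) * (Derive phi r ^ 2 + mu * phi r ^ 2)) 0 a).
  { apply RInt_sub; try lra. intros; cont. intros r Hr. apply Rmult_le_pos. apply Hw; lra.
    assert (0 <= Derive phi r ^ 2) by apply pow2_ge_0. assert (0 <= phi r ^ 2) by apply pow2_ge_0. nra. }
  assert (H3 : RInt (fun r => de ^ (d - 1) * (exp (2 * s * m r) * (Derive phi r ^ 2 + mu * phi r ^ 2))) de a <=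
               RInt (fun r => r ^ (d - 1) * exp (2 * s * m r) * (Derive phi r ^ 2 + mu * phi r ^ 2)) de a).
  { apply RInt_leR. lra. intros; cont. intros; cont. intros r Hr.
    rewrite <- Rmult_assoc. apply Rmult_le_compat_r.
    assert (0 <= Derive phi r ^ 2) by apply pow2_ge_0. assert (0 <= phi r ^ 2) by apply pow2_ge_0. nra.
    apply Rmult_le_compat_r. left; apply exp_pos. apply pow_incr; lra. }
  rewrite RInt_scalR in H3 by (apply exRI; intros; cont).
  assert (H4 : de ^ (d - 1) * (K * phi a ^ 2) <= de ^ (d - 1) * RInt (fun r => exp (2 * s * m r) * (Derive phi r ^ 2 + mu * phi r ^ 2)) de a).
  { apply Rmult_le_compat_l; auto. apply pow_le; lra. }
  lra.
Qed.

Lemma right_est (d : nat) (m c phi : R -> R) (a b de L mu s K : R) :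
  (forall x, continuous c x) -> (forall x, continuous m x) -> C1fun phi -> 0 < de -> de < a -> a + b = 1 -> 0 < a -> 0 < b -> 0 < mu ->
  (forall r, b <= r <= 1 -> L + mu <= c r) ->
  K * phi b ^ 2 <= RInt (fun t => exp (2 * s * m (1 - t)) * (Derive (fun t => phi (1 - t)) t ^ 2 + mu * phi (1 - t) ^ 2)) de a ->
  L * RInt (fun r => r ^ (d - 1) * exp (2 * s * m r) * phi r ^ 2) b 1 + b ^ (d - 1) * K * phi b ^ 2 <=
  RInt (fun r => r ^ (d - 1) * exp (2 * s * m r) * (Derive phi r ^ 2 + c r * phi r ^ 2)) b 1.
Proof.
  intros Hc Hm Hphi Hde Hda Hab1 Ha Hb Hmu Hcl HK.
  pose proof (C1_cont _ Hphi) as Hpc. pose proof (C1_dcont _ Hphi) as Hpd.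
  destruct (C1_refl phi Hphi) as [Hpsi HDpsi].
  pose proof (C1_cont _ Hpsi) as Hqc. pose proof (C1_dcont _ Hpsi) as Hqd.
  assert (Hw : forall r, 0 <= r -> 0 <= r ^ (d - 1) * exp (2 * s * m r)).
  { intros r Hr. apply Rmult_le_pos. apply pow_le; auto. left; apply exp_pos. }
  assert (H1 : RInt (fun r => L * (r ^ (d - 1) * exp (2 * s * m r) * phi r ^ 2) + 1 * (r ^ (d - 1) * exp (2 * s * m r) * (Derive phi r ^ 2 + mu * phi r ^ 2))) b 1
    <= RInt (fun r => r ^ (d - 1) * exp (2 * s * m r) * (Derive phi r ^ 2 + c r * phi r ^ 2)) b 1).
  { apply RInt_leR. lra. intros; cont. intros; cont. intros r Hr.
    assert (0 <= r ^ (d - 1) * exp (2 * s * m r) * phi r ^ 2).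
    { apply Rmult_le_pos. apply Hw; lra. apply pow2_ge_0. }
    assert (L + mu <= c r) by (apply Hcl; lra).
    assert (E : r ^ (d - 1) * exp (2 * s * m r) * (Derive phi r ^ 2 + c r * phi r ^ 2) -
      (L * (r ^ (d - 1) * exp (2 * s * m r) * phi r ^ 2) + 1 * (r ^ (d - 1) * exp (2 * s * m r) * (Derive phi r ^ 2 + mu * phi r ^ 2)))
      = (r ^ (d - 1) * exp (2 * s * m r) * phi r ^ 2) * (c r - L - mu)) by ring.
    assert (0 <= (r ^ (d - 1) * exp (2 * s * m r) * phi r ^ 2) * (c r - L - mu)) by (apply Rmult_le_pos; lra).
    lra. }
  rewrite RInt_lin in H1 by (apply exRI; intros; cont).
  set (g := fun r => r ^ (d - 1) * exp (2 * s * m r) * (Derive phi r ^ 2 + mu * phi r ^ 2)).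
  assert (Hg : forall x, continuous g x) by (intros; unfold g; cont).
  assert (H2 : RInt g b (1 - de) <= RInt g b 1).
  { apply RInt_sub; auto; try lra2. intros r Hr. unfold g. apply Rmult_le_pos. apply Hw; lra2.
    assert (0 <= Derive phi r ^ 2) by apply pow2_ge_0. assert (0 <= phi r ^ 2) by apply pow2_ge_0. nra2. }
  assert (H3 : RInt g b (1 - de) = RInt (fun t => g (1 - t)) de a).
  { replace b with (1 - a) at 1 by lra2. apply reflect; auto. }
  assert (H4 : RInt (fun t => b ^ (d - 1) * (exp (2 * s * m (1 - t)) * (Derive (fun t => phi (1 - t)) t ^ 2 + mu * phi (1 - t) ^ 2))) de a
               <= RInt (fun t => g (1 - t)) de a).
  { apply RInt_leR. lra2. intros; cont. intros; cont. intros t Ht. unfold g.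
    rewrite HDpsi. replace ((- Derive phi (1 - t)) ^ 2) with (Derive phi (1 - t) ^ 2) by ring.
    rewrite <- Rmult_assoc. apply Rmult_le_compat_r.
    assert (0 <= Derive phi (1 - t) ^ 2) by apply pow2_ge_0. assert (0 <= phi (1 - t) ^ 2) by apply pow2_ge_0. nra2.
    apply Rmult_le_compat_r. left; apply exp_pos. apply pow_incr; lra2. }
  rewrite RInt_scalR in H4 by (apply exRI; intros; cont).
  assert (H5 : b ^ (d - 1) * (K * phi b ^ 2) <= b ^ (d - 1) * RInt (fun t => exp (2 * s * m (1 - t)) * (Derive (fun t => phi (1 - t)) t ^ 2 + mu * phi (1 - t) ^ 2)) de a).
  { apply Rmult_le_compat_l; auto. apply pow_le; lra2. }
  unfold g in H2, H3, H4. lra2.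
Qed.


Theorem proposition3p2 (d : nat) (a b : R) (m c : R -> R) :
  (1 <= d)%nat ->
  0 < a -> a < b -> b < 1 -> a + b = 1 ->
  C1fun m ->
  (exists x y, 0 <= x <= 1 /\ 0 <= y <= 1 /\ m x <> m y) ->
  (forall x, continuous c x) ->
  H1 m a b -> H2 d c a b -> in_SD m a b ->
  is_lim (lambda_s d m c) p_infty (lambda_D d c a b).
Proof.
  intros Hd Ha Hab Hb1 Hab1 Hm1 Hnc Hc [Hsym Hm0] [Hcp Hcg] HSD.
  destruct HSD as [de [h [al [be [nu [l [Hde [Hh [Hha [Hab' [Hb' [Hnu [Hser [_ [_ Habove]]]]]]]]]]]]]]].
  pose proof (C1_cont _ Hm1) as Hm.
  assert (Hcab : forall r, a <= r <= b -> 0 < c r) by (intros; apply Hcp; lra).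
  destruct (lamD_props d c a b Ha Hab Hc Hcab) as [LD1 [LD2 LD3]].
  assert (ESnn : forall s x, ES d m c s x -> 0 <= x).
  { intros s x [phi [Hphi [_ Hx]]]. rewrite Hx.
    change (0 <= Qf (fun r => r ^ (d - 1) * exp (2 * s * m r)) c phi 0 1). apply Q_nonneg; auto.
    intros; cont. lra. intros x0 Hx0; split. apply Rmult_le_pos. apply pow_le; lra. left; apply exp_pos.
    apply Rlt_le, Hcp; lra. }
  assert (UP : forall eps, 0 < eps -> forall s, (exists x, ES d m c s x) /\ lambda_s d m c s <= lambda_D d c a b + eps).
  { intros eps Heps s.
    assert (Hq : exists q, ED d c a b q /\ q <= lambda_D d c a b + eps / 2).
    { apply NNPP; intro Hn. assert (lambda_D d c a b + eps / 2 <= lambda_D d c a b).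
      { apply LD2. intros q Hq. apply Rnot_lt_le. intros Hlt. apply Hn. exists q; split; auto; lra. }
      lra. }
    destruct Hq as [q [Hq Hq2]].
    destruct (upper d m c a b Ha Hab Hb1 Hc Hcp Hm Hm0 q Hq (eps / 2) ltac:(lra) s) as [x [Hx Hx2]].
    split. exists x; auto.
    change (lambda_s d m c s) with (real (Glb_Rbar (ES d m c s))).
    destruct (glb_props (ES d m c s) (ex_intro _ x Hx) (ESnn s)) as [G1 _]. specialize (G1 x Hx). lra. }
  destruct (continuity_ab_min c 0 a) as [x1 [Hx1 Hx1r]]. lra. intros; apply continuity_pt_filterlim; apply Hc.
  destruct (continuity_ab_min c b 1) as [x2 [Hx2 Hx2r]]. lra. intros; apply continuity_pt_filterlim; apply Hc.
  assert (Hc1 : lambda_D d c a b < c x1) by (apply Hcg; lra).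
  assert (Hc2 : lambda_D d c a b < c x2) by (apply Hcg; lra).
  set (mu := Rmin (c x1) (c x2) - lambda_D d c a b).
  assert (Hmu : 0 < mu). { unfold mu. apply Rmin_case; lra. }
  assert (Hcl : forall r, 0 <= r <= a -> lambda_D d c a b + mu <= c r).
  { intros r Hr. unfold mu. pose proof (Rmin_l (c x1) (c x2)). pose proof (Hx1 r Hr). lra. }
  assert (Hcr : forall r, b <= r <= 1 -> lambda_D d c a b + mu <= c r).
  { intros r Hr. unfold mu. pose proof (Rmin_r (c x1) (c x2)). pose proof (Hx2 r Hr). lra. }
  clearbody mu.
  assert (LOW : forall eta, 0 < eta -> exists s0, forall s, s0 <= s -> lambda_D d c a b - eta <= lambda_s d m c s).
  { intros eta Heta.
    destruct (bdry_ineq d c a b Ha Hab Hc Hcab eta Heta) as [C [HC0 HC]].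
    assert (Hdp : 0 < de ^ (d - 1)) by (apply pow_lt; lra).
    assert (Hbp : 0 < b ^ (d - 1)) by (apply pow_lt; lra).
    set (K := C / de ^ (d - 1) + C / b ^ (d - 1) + 1).
    assert (HKC1 : C <= de ^ (d - 1) * K).
    { unfold K. assert (0 <= C / b ^ (d - 1)) by (apply Rdiv_le_0_compat; lra).
      replace (de ^ (d - 1) * (C / de ^ (d - 1) + C / b ^ (d - 1) + 1)) with (C + de ^ (d - 1) * (C / b ^ (d - 1) + 1)) by (field; lra).
      assert (0 <= de ^ (d - 1) * (C / b ^ (d - 1) + 1)) by (apply Rmult_le_pos; lra). lra. }
    assert (HKC2 : C <= b ^ (d - 1) * K).
    { unfold K. assert (0 <= C / de ^ (d - 1)) by (apply Rdiv_le_0_compat; lra).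
      replace (b ^ (d - 1) * (C / de ^ (d - 1) + C / b ^ (d - 1) + 1)) with (C + b ^ (d - 1) * (C / de ^ (d - 1) + 1)) by (field; lra).
      assert (0 <= b ^ (d - 1) * (C / de ^ (d - 1) + 1)) by (apply Rmult_le_pos; lra). lra. }
    assert (HK : 0 < K). { unfold K. assert (0 <= C / de ^ (d - 1)) by (apply Rdiv_le_0_compat; lra).
      assert (0 <= C / b ^ (d - 1)) by (apply Rdiv_le_0_compat; lra). lra. }
    clearbody K.
    assert (TH1 : trace_hyp m a de h al be nu l).
    { unfold trace_hyp. repeat split; auto; try lra.
      rewrite Hm0; lra.
      intros n r Hr. apply (Habove n r); auto.
      intros n r Hr. apply (Habove n r); auto. }
    assert (TH2 : trace_hyp (fun t => m (1 - t)) a de h al be nu l).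
    { unfold trace_hyp. repeat split; auto; try lra.
      intros; cont.
      replace (1 - a) with b by lra. rewrite Hm0; lra.
      intros n r Hr. apply (Habove n r); auto.
      intros n r Hr. apply (Habove n r); auto. }
    destruct (trace_main m a de h al be nu l mu TH1 Hmu K HK) as [s1 [Hs1 T1]].
    destruct (trace_main (fun t => m (1 - t)) a de h al be nu l mu TH2 Hmu K HK) as [s2 [Hs2 T2]].
    exists (Rmax s1 s2). intros s Hs.
    assert (Hss1 : s1 <= s) by (eapply Rle_trans; [apply Rmax_l|exact Hs]).
    assert (Hss2 : s2 <= s) by (eapply Rle_trans; [apply Rmax_r|exact Hs]).
    destruct (UP 1 ltac:(lra) s) as [Hne _].
    change (lambda_s d m c s) with (real (Glb_Rbar (ES d m c s))).
    destruct (glb_props (ES d m c s) Hne (ESnn s)) as [_ G2]. apply G2.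
    intros x [phi [Hphi [HN Hx]]].
    pose proof (C1_cont _ Hphi) as Hpc. pose proof (C1_dcont _ Hphi) as Hpd.
    specialize (T1 s Hss1 phi Hphi).
    destruct (C1_refl phi Hphi) as [Hpsi _].
    specialize (T2 s Hss2 _ Hpsi). simpl in T2. replace (1 - a) with b in T2 by lra.
    pose proof (left_est d m c phi a de (lambda_D d c a b) mu s K Hc Hm Hphi ltac:(lra) ltac:(lra) Hmu Hcl T1) as LE.
    pose proof (right_est d m c phi a b de (lambda_D d c a b) mu s K Hc Hm Hphi ltac:(lra) ltac:(lra) Hab1 Ha ltac:(lra) Hmu Hcr T2) as RE.
    specialize (HC phi Hphi).
    assert (EQ : Qf (fun r => r ^ (d - 1)) c phi a b = RInt (fun r => r ^ (d - 1) * exp (2 * s * m r) * (Derive phi r ^ 2 + c r * phi r ^ 2)) a b).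
    { unfold Qf. apply RInt_ext. intros y Hy. rewrite Rmin_left, Rmax_right in Hy by lra. rewrite Hm0 by lra.
      rewrite Rmult_0_r, exp_0. toR; ring. }
    assert (EN : Nf (fun r => r ^ (d - 1)) phi a b = RInt (fun r => r ^ (d - 1) * exp (2 * s * m r) * phi r ^ 2) a b).
    { unfold Nf. apply RInt_ext. intros y Hy. rewrite Rmin_left, Rmax_right in Hy by lra. rewrite Hm0 by lra.
      rewrite Rmult_0_r, exp_0. toR; ring. }
    rewrite EQ, EN in HC.
    rewrite (split3 _ a b) in HN by (intros; cont).
    rewrite (split3 _ a b) in Hx by (intros; cont).
    assert (NL : 0 <= RInt (fun r => r ^ (d - 1) * exp (2 * s * m r) * phi r ^ 2) 0 a).
    { apply RInt_ge_0. lra. apply exRI; intros; cont. intros r Hr. apply Rmult_le_pos. apply Rmult_le_pos. apply pow_le; lra. left; apply exp_pos. apply pow2_ge_0. }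
    assert (NI : 0 <= RInt (fun r => r ^ (d - 1) * exp (2 * s * m r) * phi r ^ 2) a b).
    { apply RInt_ge_0. lra. apply exRI; intros; cont. intros r Hr. apply Rmult_le_pos. apply Rmult_le_pos. apply pow_le; lra. left; apply exp_pos. apply pow2_ge_0. }
    assert (NR : 0 <= RInt (fun r => r ^ (d - 1) * exp (2 * s * m r) * phi r ^ 2) b 1).
    { apply RInt_ge_0. lra. apply exRI; intros; cont. intros r Hr. apply Rmult_le_pos. apply Rmult_le_pos. apply pow_le; lra. left; apply exp_pos. apply pow2_ge_0. }
    assert (A1 : C * phi a ^ 2 <= de ^ (d - 1) * K * phi a ^ 2) by (apply Rmult_le_compat_r; [apply pow2_ge_0|lra]).
    assert (A2 : C * phi b ^ 2 <= b ^ (d - 1) * K * phi b ^ 2) by (apply Rmult_le_compat_r; [apply pow2_ge_0|lra]).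
    assert (A3 : 0 <= eta * RInt (fun r => r ^ (d - 1) * exp (2 * s * m r) * phi r ^ 2) 0 a) by (apply Rmult_le_pos; lra).
    assert (A4 : 0 <= eta * RInt (fun r => r ^ (d - 1) * exp (2 * s * m r) * phi r ^ 2) b 1) by (apply Rmult_le_pos; lra).
    rewrite Hx. nra. }
  apply is_lim_spec. intros eps. simpl.
  destruct (LOW (eps / 2)) as [s0 Hs0]. apply Rdiv_lt_0_compat; [apply cond_pos|lra].
  exists s0. intros s Hs.
  destruct (UP (eps / 2) ltac:(pose proof (cond_pos eps); lra) s) as [_ U].
  specialize (Hs0 s (Rlt_le _ _ Hs)).
  apply Rabs_def1; pose proof (cond_pos eps); lra.
Qed.
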